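(* Let $\beta=(\beta_n)_{n\ge0}$ be a sequence of positive numbers with $\liminf_n\beta_n^{1/n}\ge1$. The following are equivalent: 1) every symbol $\phi$ with $\phi(0)=0$ induces a bounded composition operator $C_\phi$ on $H^2(\beta)$, and $\sup\{\|C_\phi\|:\phi \text{ symbol},\ \phi(0)=0\}<\infty$; 2) $\beta$ is essentially decreasing.
   Context: $H^2(\beta)$ is the Hilbert space of analytic functions $f(z)=\sum_{n\ge0}a_nz^n$ on the unit disk $\mathbb D$ with $\|f\|^2=\sum_{n\ge0}|a_n|^2\beta_n<\infty$. A symbol is a non-constant analytic map $\phi:\mathbb D\to\mathbb D$ and $C_\phi f=f\circ\phi$. $\beta$ is essentially decreasing if there is $C\ge1$ with $\beta_m\le C\beta_n$ for all $m\ge n\ge0$. *)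

(* Defs.v *)
From Stdlib Require Import Reals.
From Coquelicot Require Import Coquelicot.
Open Scope R_scope.

Definition in_disk (z : C) : Prop := Cmod z < 1.

Definition weight_ok (beta : nat -> R) : Prop :=
  (forall n, 0 < beta n) /\
  Rbar_le (Finite 1) (LimInf_seq (fun n => Rpower (beta n) (/ INR n))).

(* f(z) = sum a_n z^n belongs to H^2(beta), given by its Taylor coefficients a. *)
Definition inH2 (beta : nat -> R) (a : nat -> C) : Prop :=
  ex_series (fun n => (Cmod (a n)) ^ 2 * beta n).

Definition H2norm (beta : nat -> R) (a : nat -> C) : R :=
  sqrt (Series (fun n => (Cmod (a n)) ^ 2 * beta n)).

Definition analytic_on_disk (phi : C -> C) : Prop :=
  exists c : nat -> C, forall z, in_disk z -> is_pseries c z (phi z).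

Definition symbol (phi : C -> C) : Prop :=
  analytic_on_disk phi /\
  (forall z, in_disk z -> in_disk (phi z)) /\
  (exists z1 z2, in_disk z1 /\ in_disk z2 /\ phi z1 <> phi z2).

(* b is the Taylor coefficient sequence of f o phi on D, where f = sum a_n z^n. *)
Definition comp_coeffs (a : nat -> C) (phi : C -> C) (b : nat -> C) : Prop :=
  forall z, in_disk z ->
    exists w, is_pseries a (phi z) w /\ is_pseries b z w.

Definition Cphi_bounded_by (beta : nat -> R) (phi : C -> C) (M : R) : Prop :=
  forall a, inH2 beta a ->
    exists b, comp_coeffs a phi b /\ inH2 beta b /\
      H2norm beta b <= M * H2norm beta a.

Definition ess_decreasing (beta : nat -> R) : Prop :=
  exists K, 1 <= K /\ forall m n, (n <= m)%nat -> beta m <= K * beta n.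

(* Main.v *)
Require Import Defs.
From Stdlib Require Import Reals Lra Lia Arith.
From Coquelicot Require Import Coquelicot.
Open Scope R_scope.

Fixpoint csum (f : nat -> C) (n : nat) : C :=
  match n with O => f O | S m => Cplus (csum f m) (f (S m)) end.

Lemma csum_sum_n f n : csum f n = sum_n f n.
Proof.
induction n; simpl. now rewrite sum_O.
rewrite sum_Sn, IHn. reflexivity.
Qed.

Lemma Re_csum f n : Re (csum f n) = sum_f_R0 (fun k => Re (f k)) n.
Proof. induction n; simpl; auto. rewrite <- IHn. reflexivity. Qed.
Lemma Im_csum f n : Im (csum f n) = sum_f_R0 (fun k => Im (f k)) n.
Proof. induction n; simpl; auto. rewrite <- IHn. reflexivity. Qed.

Lemma is_series_C (a : nat -> C) (l : C) :
  is_series a l <-> is_series (fun k => Re (a k)) (Re l) /\ is_series (fun k => Im (a k)) (Im l).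
Proof.
unfold is_series.
split.
- intros H. pose proof (proj1 (filterlim_locally (F:=eventually) (sum_n a) l) H) as H'; clear H; rename H' into H.
  split; apply (proj2 (filterlim_locally (F:=eventually) _ _)); intros eps;
  destruct (H eps) as [N HN]; exists N; intros n Hn;
  specialize (HN n Hn); destruct HN as [H1 H2];
  [ rewrite <- csum_sum_n in H1; rewrite sum_n_Reals, <- Re_csum; exact H1
  | rewrite <- csum_sum_n in H2; rewrite sum_n_Reals, <- Im_csum; exact H2].
- intros [H1 H2]. pose proof (proj1 (filterlim_locally (F:=eventually) _ _) H1) as H1'.
  pose proof (proj1 (filterlim_locally (F:=eventually) _ _) H2) as H2'. clear H1 H2. rename H1' into H1. rename H2' into H2.
  apply (proj2 (filterlim_locally (F:=eventually) (sum_n a) l)). intros eps.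
  destruct (H1 eps) as [N1 HN1]; destruct (H2 eps) as [N2 HN2].
  exists (max N1 N2). intros n Hn. specialize (HN1 n ltac:(lia)). specialize (HN2 n ltac:(lia)).
  rewrite sum_n_Reals, <- Re_csum, csum_sum_n in HN1.
  rewrite sum_n_Reals, <- Im_csum, csum_sum_n in HN2.
  split; assumption.
Qed.

Definition conv (a b : nat -> C) (n : nat) : C := csum (fun k => Cmult (a k) (b (n - k)%nat)) n.

Lemma im_le_Cmod c : Rabs (Im c) <= Cmod c.
Proof. pose proof (Rmax_Cmod c). destruct c as [x y]. simpl in *.
  eapply Rle_trans; [apply Rmax_r|exact H]. Qed.
Lemma re_le_Cmod' c : Rabs (Re c) <= Cmod c.
Proof. apply re_le_Cmod. Qed.

Lemma ex_series_Rabs_of_Cmod (a : nat -> C) (f : C -> R) :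
  (forall c, Rabs (f c) <= Cmod c) ->
  ex_series (fun n => Cmod (a n)) -> ex_series (fun n => Rabs (f (a n))).
Proof.
intros Hf H. apply (ex_series_le (V:=R_CompleteNormedModule) _ (fun n => Cmod (a n))); auto.
intros n. change (norm (Rabs (f (a n)))) with (Rabs (Rabs (f (a n)))). rewrite Rabs_Rabsolu. apply Hf.
Qed.

Lemma is_series_R_minus (u v : nat -> R) U V : is_series u U -> is_series v V ->
  is_series (fun n => u n - v n) (U - V).
Proof. intros H1 H2. apply (is_series_minus u v U V H1 H2). Qed.

Lemma is_series_R_plus (u v : nat -> R) U V : is_series u U -> is_series v V ->
  is_series (fun n => u n + v n) (U + V).
Proof. intros H1 H2. apply (is_series_plus u v U V H1 H2). Qed.

Lemma is_series_C_mult (a b : nat -> C) la lb :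
  is_series a la -> is_series b lb ->
  ex_series (fun n => Cmod (a n)) -> ex_series (fun n => Cmod (b n)) ->
  is_series (conv a b) (Cmult la lb).
Proof.
intros Ha Hb Aa Ab.
apply is_series_C in Ha as [Har Hai]. apply is_series_C in Hb as [Hbr Hbi].
pose proof (ex_series_Rabs_of_Cmod a Re re_le_Cmod' Aa) as Aar.
pose proof (ex_series_Rabs_of_Cmod a Im im_le_Cmod Aa) as Aai.
pose proof (ex_series_Rabs_of_Cmod b Re re_le_Cmod' Ab) as Abr.
pose proof (ex_series_Rabs_of_Cmod b Im im_le_Cmod Ab) as Abi.
pose proof (is_series_mult _ _ _ _ Har Hbr Aar Abr) as M1.
pose proof (is_series_mult _ _ _ _ Hai Hbi Aai Abi) as M2.
pose proof (is_series_mult _ _ _ _ Har Hbi Aar Abi) as M3.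
pose proof (is_series_mult _ _ _ _ Hai Hbr Aai Abr) as M4.
apply is_series_C; split.
- eapply is_series_ext; [|apply (is_series_R_minus _ _ _ _ M1 M2)].
  intros n. simpl. unfold conv. rewrite Re_csum.
  rewrite <- minus_sum. apply sum_eq. intros i _. destruct (a i), (b (n-i)%nat). simpl. ring.
- eapply is_series_ext; [|apply (is_series_R_plus _ _ _ _ M3 M4)].
  intros n. simpl. unfold conv. rewrite Im_csum.
  rewrite <- plus_sum. apply sum_eq. intros i _. destruct (a i), (b (n-i)%nat). simpl. ring.
Qed.

Lemma pow_n_Cpow (z : C) k : pow_n z k = Cpow z k.
Proof. induction k; simpl; try rewrite IHk; reflexivity. Qed.

Definition tm (d : nat -> C) (z : C) (k : nat) : C := Cmult (Cpow z k) (d k).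

Lemma is_pseries_tm d z l : is_pseries d z l <-> is_series (tm d z) l.
Proof.
unfold is_pseries. split; apply is_series_ext; intros n; unfold tm;
  rewrite <- pow_n_Cpow; reflexivity.
Qed.

Definition PS (d : nat -> C) (h : C -> C) : Prop :=
  forall z, Cmod z < 1 -> is_series (tm d z) (h z).

Lemma is_series_fin (u : nat -> C) N :
  (forall k, (N < k)%nat -> u k = RtoC 0) -> is_series u (csum u N).
Proof.
intros H. unfold is_series. apply (proj2 (filterlim_locally (F:=eventually) (sum_n u) _)).
intros eps. exists N. intros n Hn.
replace (sum_n u n) with (csum u N). apply ball_center.
rewrite <- csum_sum_n. induction Hn. reflexivity.
simpl. rewrite H by lia. rewrite IHHn. destruct (csum u m). unfold Cplus. simpl. f_equal; ring.
Qed.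

Lemma is_series_fin_R (u : nat -> R) N :
  (forall k, (N < k)%nat -> u k = 0) -> is_series u (sum_f_R0 u N).
Proof.
intros H. unfold is_series. apply (proj2 (filterlim_locally (F:=eventually) (sum_n u) _)).
intros eps. exists N. intros n Hn.
replace (sum_n u n) with (sum_f_R0 u N). apply ball_center.
rewrite sum_n_Reals. induction Hn. reflexivity.
simpl. rewrite H by lia. rewrite IHHn. ring.
Qed.

Lemma lim0_bounded (u : nat -> R) : is_lim_seq u 0 -> exists M, forall n, Rabs (u n) <= M.
Proof.
intros H. apply is_lim_seq_spec in H. destruct (H (mkposreal 1 Rlt_0_1)) as [N HN].
exists (1 + sum_f_R0 (fun k => Rabs (u k)) N). intros n.
assert (Hs : forall m, 0 <= sum_f_R0 (fun k => Rabs (u k)) m).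
{ intros m. apply cond_pos_sum. intros; apply Rabs_pos. }
destruct (le_lt_dec N n) as [Hn|Hn].
- specialize (HN n Hn). simpl in HN. rewrite Rminus_0_r in HN. specialize (Hs N). lra.
- assert (G : forall m j, (j <= m)%nat -> Rabs (u j) <= sum_f_R0 (fun k => Rabs (u k)) m).
  { clear HN Hn. induction m; intros j Hj. replace j with 0%nat by lia. simpl; lra.
    simpl. destruct (Nat.eq_dec j (S m)).
    subst. pose proof (Hs m). lra. pose proof (Rabs_pos (u (S m))).
    specialize (IHm j ltac:(lia)). lra. }
  specialize (G N n ltac:(lia)). lra.
Qed.

Lemma Cmod_le_re_im c : Cmod c <= Rabs (Re c) + Rabs (Im c).
Proof.
destruct c as [x y]. unfold Cmod. simpl.
pose proof (Rabs_pos x). pose proof (Rabs_pos y).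
rewrite <- (sqrt_Rsqr (Rabs x + Rabs y)) by lra.
apply sqrt_le_1_alt. unfold Rsqr.
assert (x * (x * 1) = Rabs x * Rabs x). { rewrite <- Rabs_mult. rewrite Rabs_right. ring. nra. }
assert (y * (y * 1) = Rabs y * Rabs y). { rewrite <- Rabs_mult. rewrite Rabs_right. ring. nra. }
nra.
Qed.

Lemma series_terms_bounded (u : nat -> C) l : is_series u l -> exists M, forall n, Cmod (u n) <= M.
Proof.
intros H. apply is_series_C in H as [H1 H2].
assert (H1' := ex_series_lim_0 _ (ex_intro _ _ H1)).
assert (H2' := ex_series_lim_0 _ (ex_intro _ _ H2)). clear H1 H2. rename H1' into H1. rename H2' into H2.
destruct (lim0_bounded _ H1) as [M1 HM1]. destruct (lim0_bounded _ H2) as [M2 HM2].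
exists (M1 + M2). intros n. eapply Rle_trans. apply Cmod_le_re_im. specialize (HM1 n); specialize (HM2 n). lra.
Qed.

Lemma Cmod_tm d z k : Cmod (tm d z k) = Cmod (d k) * Cmod z ^ k.
Proof. unfold tm. rewrite Cmod_mult, Cmod_pow. ring. Qed.

Lemma PS_AC d h z : PS d h -> Cmod z < 1 -> ex_series (fun k => Cmod (d k) * Cmod z ^ k).
Proof.
intros H Hz. set (rho := (1 + Cmod z) / 2).
assert (Hr : Cmod z < rho < 1) by (unfold rho; lra).
assert (Hr0 : 0 < rho) by (pose proof (Cmod_ge_0 z); lra).
assert (Hrc : Cmod (RtoC rho) < 1) by (rewrite Cmod_R, Rabs_right; lra).
destruct (series_terms_bounded _ _ (H _ Hrc)) as [M HM].
apply (ex_series_le (V:=R_CompleteNormedModule) _ (fun k => M * (Cmod z / rho) ^ k)).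
- intros n. change (norm (Cmod (d n) * Cmod z ^ n)) with (Rabs (Cmod (d n) * Cmod z ^ n)).
  rewrite Rabs_right by (apply Rle_ge; apply Rmult_le_pos; [apply Cmod_ge_0|apply pow_le, Cmod_ge_0]).
  specialize (HM n). rewrite Cmod_tm, Cmod_R, Rabs_right in HM by lra.
  unfold Rdiv. rewrite Rpow_mult_distr, pow_inv.
  assert (0 < rho ^ n) by (apply pow_lt; lra).
  assert (Cmod (d n) * Cmod z ^ n = (Cmod (d n) * rho ^ n) * (Cmod z ^ n * / rho ^ n)).
  { field. lra. }
  rewrite H1. assert (0 <= Cmod z ^ n * / rho ^ n).
  { apply Rmult_le_pos. apply pow_le, Cmod_ge_0. left; apply Rinv_0_lt_compat; lra. }
  replace (M * (Cmod z ^ n * / rho ^ n)) with (M * (Cmod z ^ n * / rho ^ n)) by ring.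
  apply Rmult_le_compat_r; auto.
- apply (ex_series_scal_l (V:=R_NormedModule) M). apply ex_series_geom.
  rewrite Rabs_right. apply (Rmult_lt_reg_r rho); try lra. unfold Rdiv. rewrite Rmult_assoc, Rinv_l; lra.
  apply Rle_ge, Rmult_le_pos. apply Cmod_ge_0. left; apply Rinv_0_lt_compat; lra.
Qed.

Lemma csum_ext_loc f g n : (forall k, (k <= n)%nat -> f k = g k) -> csum f n = csum g n.
Proof. induction n; intros H; simpl. apply H; lia. rewrite IHn, H; auto. Qed.

Lemma csum_mult_l c f n : csum (fun k => Cmult c (f k)) n = Cmult c (csum f n).
Proof. induction n; simpl; auto. rewrite IHn. ring. Qed.

Lemma csum_plus f g n : csum (fun k => Cplus (f k) (g k)) n = Cplus (csum f n) (csum g n).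
Proof. induction n; simpl; auto. rewrite IHn. ring. Qed.

Lemma csum_zero f n : (forall k, (k <= n)%nat -> f k = RtoC 0) -> csum f n = RtoC 0.
Proof. induction n; intros H; simpl. apply H; lia. rewrite IHn, H; auto. ring. Qed.

Lemma Cmod_csum_le f n : Cmod (csum f n) <= sum_f_R0 (fun k => Cmod (f k)) n.
Proof. induction n; simpl. lra. eapply Rle_trans. apply Cmod_triangle. lra. Qed.

Lemma PS_mult c f d g : PS c f -> PS d g -> PS (conv c d) (fun z => Cmult (f z) (g z)).
Proof.
intros Hc Hd z Hz.
assert (A1 : ex_series (fun k => Cmod (tm c z k))).
{ eapply ex_series_ext; [|apply (PS_AC c f z Hc Hz)]. intros; rewrite Cmod_tm; reflexivity. }
assert (A2 : ex_series (fun k => Cmod (tm d z k))).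
{ eapply ex_series_ext; [|apply (PS_AC d g z Hd Hz)]. intros; rewrite Cmod_tm; reflexivity. }
pose proof (is_series_C_mult _ _ _ _ (Hc z Hz) (Hd z Hz) A1 A2) as H.
eapply is_series_ext; [|exact H]. intros n. unfold conv, tm.
rewrite <- csum_mult_l. apply csum_ext_loc. intros k Hk.
replace n with (k + (n - k))%nat at 3 by lia. rewrite Cpow_add_r. ring.
Qed.

Lemma PS_plus' c f d g : PS c f -> PS d g -> PS (fun k => Cplus (c k) (d k)) (fun z => Cplus (f z) (g z)).
Proof.
intros Hc Hd z Hz. pose proof (is_series_plus _ _ _ _ (Hc z Hz) (Hd z Hz)) as H.
eapply is_series_ext; [|exact H]. intros n. unfold tm. simpl. change plus with Cplus. ring.
Qed.

Lemma PS_scal a c f : PS c f -> PS (fun k => Cmult a (c k)) (fun z => Cmult a (f z)).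
Proof.
intros Hc z Hz. pose proof (is_series_scal_l a _ _ (Hc z Hz)) as H.
eapply is_series_ext; [|exact H]. intros n. unfold tm. simpl. change scal with Cmult. 
change (@Hierarchy.mult C_AbsRing) with Cmult. ring.
Qed.

Definition delta0 (a : C) (k : nat) : C := if Nat.eqb k 0 then a else RtoC 0.

Lemma PS_delta0 a : PS (delta0 a) (fun _ => a).
Proof.
intros z Hz. pose proof (is_series_fin (tm (delta0 a) z) 0) as H.
replace a with (csum (tm (delta0 a) z) 0) at 2.
apply H. intros k Hk. unfold tm, delta0. destruct k. lia. simpl. ring.
simpl. unfold tm, delta0. simpl. ring.
Qed.

Lemma PS_ext c d f g : (forall k, c k = d k) -> (forall z, Cmod z < 1 -> f z = g z) -> PS c f -> PS d g.
Proof.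
intros H1 H2 H z Hz. rewrite <- H2 by auto. eapply is_series_ext; [|apply (H z Hz)].
intros n; unfold tm; rewrite H1; reflexivity.
Qed.

Definition shift (a : nat -> C) (n : nat) : C := a (S n).

Fixpoint hor (c a : nat -> C) (L : nat) : nat -> C :=
  match L with
  | O => delta0 (a O)
  | S L' => fun k => Cplus (delta0 (a O) k) (conv c (hor c (shift a) L') k)
  end.

Fixpoint horv (phi : C -> C) (a : nat -> C) (L : nat) (z : C) : C :=
  match L with
  | O => a O
  | S L' => Cplus (a O) (Cmult (phi z) (horv phi (shift a) L' z))
  end.

Lemma PS_hor c phi : PS c phi -> forall L a, PS (hor c a L) (horv phi a L).
Proof.
intros Hc L. induction L; intros a; simpl.
- apply PS_delta0.
- apply (PS_plus' _ (fun _ => a O)). apply PS_delta0.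
  apply PS_mult; auto.
Qed.

Definition om (N : nat) : C := (cos (2 * PI / INR N), sin (2 * PI / INR N)).

Lemma om_pow N d : Cpow (om N) d = (cos (INR d * (2 * PI / INR N)), sin (INR d * (2 * PI / INR N))).
Proof.
induction d.
- simpl. rewrite Rmult_0_l, cos_0, sin_0. reflexivity.
- rewrite Cpow_S, IHd. unfold om. rewrite S_INR.
  replace ((INR d + 1) * (2 * PI / INR N)) with (2 * PI / INR N + INR d * (2 * PI / INR N)) by ring.
  rewrite cos_plus, sin_plus. unfold Cmult. simpl. f_equal; ring.
Qed.

Lemma om_N N : (0 < N)%nat -> Cpow (om N) N = RtoC 1.
Proof.
intros HN. rewrite om_pow.
replace (INR N * (2 * PI / INR N)) with (2 * PI).
rewrite cos_2PI, sin_2PI. reflexivity.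
field. apply not_0_INR. lia.
Qed.

Lemma om_neq1 N d : (0 < d < N)%nat -> Cpow (om N) d <> RtoC 1.
Proof.
intros Hd Heq. rewrite om_pow in Heq. unfold RtoC in Heq. injection Heq as H1 H2.
set (x := INR d * (2 * PI / INR N)) in *.
assert (Hx : 0 < x / 2 < PI).
{ unfold x. assert (0 < INR d) by (apply lt_0_INR; lia).
  assert (INR d < INR N) by (apply lt_INR; lia).
  assert (0 < INR N) by lra. pose proof PI_RGT_0.
  split. apply Rmult_lt_0_compat; try lra. apply Rmult_lt_0_compat; try lra.
  unfold Rdiv. apply Rmult_lt_0_compat; try lra. apply Rinv_0_lt_compat; lra.
  replace (INR d * (2 * PI / INR N) / 2) with (PI * (INR d / INR N)) by (field; lra).
  rewrite <- (Rmult_1_r PI) at 2. apply Rmult_lt_compat_l. lra.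
  apply (Rmult_lt_reg_r (INR N)). lra. unfold Rdiv. rewrite Rmult_assoc, Rinv_l; lra. }
pose proof (sin_gt_0 _ (proj1 Hx) (proj2 Hx)).
replace x with (2 * (x / 2)) in H1 by field. rewrite cos_2a_sin in H1. pose proof (Rmult_lt_0_compat _ _ H H). lra.
Qed.

Lemma Cmod_om_pow N d : Cmod (Cpow (om N) d) = 1.
Proof.
rewrite om_pow. unfold Cmod. simpl. transitivity (sqrt 1); [f_equal|apply sqrt_1].
pose proof (sin2_cos2 (INR d * (2 * PI / INR N))) as H. unfold Rsqr in H. 
match goal with |- ?a = _ => transitivity (sin (INR d * (2 * PI / INR N)) * sin (INR d * (2 * PI / INR N)) + cos (INR d * (2 * PI / INR N)) * cos (INR d * (2 * PI / INR N))) end.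
ring. exact H.
Qed.

Lemma om_pow_nz N d : Cpow (om N) d <> RtoC 0.
Proof. intros H. pose proof (Cmod_om_pow N d). rewrite H, Cmod_0 in H0. lra. Qed.

Lemma conj_mult_self (c : C) : Cmult c (Cconj c) = RtoC (Cmod c ^ 2).
Proof. rewrite Cmod2_conj. reflexivity. Qed.

Lemma geom_csum (z : C) n : Cmult (Cminus z 1) (csum (fun j => Cpow z j) n) = Cminus (Cpow z (S n)) 1.
Proof.
induction n; simpl. ring.
rewrite Cmult_plus_distr_l, IHn. simpl. ring.
Qed.

Lemma geom_zero (z : C) n : Cpow z (S n) = RtoC 1 -> z <> RtoC 1 -> csum (fun j => Cpow z j) n = RtoC 0.
Proof.
intros H1 H2. pose proof (geom_csum z n) as G. rewrite H1 in G.
assert (Hz : Cminus z 1 <> RtoC 0). { intros E. apply H2. apply Ceq_minus. exact E. }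
replace (csum (fun j => Cpow z j) n) with (Cmult (Cinv (Cminus z 1)) (Cmult (Cminus z 1) (csum (fun j => Cpow z j) n))).
rewrite G. ring.
rewrite Cmult_assoc, Cinv_l by auto. ring.
Qed.

Definition zeta (N k l : nat) : C := Cmult (Cpow (om N) k) (Cconj (Cpow (om N) l)).

Lemma zeta_pow_N N k l : (0 < N)%nat -> Cpow (zeta N k l) N = RtoC 1.
Proof.
intros HN. unfold zeta. rewrite Cpow_mult_l, <- Cpow_conj, <- !Cpow_mult_r.
rewrite (Nat.mul_comm k N), (Nat.mul_comm l N), !Cpow_mult_r, om_N by auto.
rewrite !Cpow_1_l. replace (Cconj (RtoC 1)) with (RtoC 1) by (unfold Cconj, RtoC; simpl; f_equal; ring). ring.
Qed.

Lemma zeta_diag N k : zeta N k k = RtoC 1.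
Proof. unfold zeta. rewrite conj_mult_self, Cmod_om_pow. simpl. f_equal. ring. Qed.

Lemma Cmult_cancel_l (w x y : C) : w <> RtoC 0 -> Cmult w x = Cmult w y -> x = y.
Proof.
intros Hw E. apply (f_equal (fun t => Cmult (Cinv w) t)) in E.
rewrite !Cmult_assoc, Cinv_l in E by auto. rewrite !Cmult_1_l in E. exact E.
Qed.

Lemma om_pow_inj N k l : (k < N)%nat -> (l < N)%nat -> Cpow (om N) k = Cpow (om N) l -> k = l.
Proof.
intros Hk Hl E. destruct (lt_eq_lt_dec k l) as [[H|H]|H]; auto.
- exfalso. apply (om_neq1 N (l - k)); [lia|].
  replace l with (k + (l - k))%nat in E by lia. rewrite Cpow_add_r in E.
  symmetry. apply (Cmult_cancel_l (Cpow (om N) k)). apply om_pow_nz. rewrite <- E. ring.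
- exfalso. apply (om_neq1 N (k - l)); [lia|].
  replace k with (l + (k - l))%nat in E by lia. rewrite Cpow_add_r in E.
  symmetry. apply (Cmult_cancel_l (Cpow (om N) l)). apply om_pow_nz. rewrite E. ring.
Qed.

Lemma zeta_neq1 N k l : (k < N)%nat -> (l < N)%nat -> k <> l -> zeta N k l <> RtoC 1.
Proof.
intros Hk Hl Hkl E. apply Hkl. apply (om_pow_inj N); auto.
unfold zeta in E. apply (f_equal (fun w => Cmult w (Cpow (om N) l))) in E.
rewrite <- Cmult_assoc, (Cmult_comm (Cconj _)), conj_mult_self, Cmod_om_pow in E.
rewrite Cmult_1_l in E. rewrite <- E. simpl. unfold Cmult; destruct (Cpow (om N) k); simpl; f_equal; ring.
Qed.

Lemma zeta_sum N k l : (k < S N)%nat -> (l < S N)%nat ->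
  csum (fun j => Cpow (zeta (S N) k l) j) N = if Nat.eqb k l then RtoC (INR (S N)) else RtoC 0.
Proof.
intros Hk Hl. destruct (Nat.eqb_spec k l).
- subst. rewrite zeta_diag. clear. induction N. simpl. ring.
  simpl csum. rewrite IHN. rewrite Cpow_1_l. rewrite (S_INR (S N)). rewrite RtoC_plus. ring.
- apply geom_zero. apply zeta_pow_N. lia. apply zeta_neq1; auto.
Qed.

Lemma csum_conj f n : Cconj (csum f n) = csum (fun k => Cconj (f k)) n.
Proof. induction n; simpl; auto. rewrite Cplus_conj, IHn. reflexivity. Qed.

Lemma csum_mult_r c f n : Cmult (csum f n) c = csum (fun k => Cmult (f k) c) n.
Proof. induction n; simpl; auto. rewrite <- IHn. ring. Qed.

Lemma csum_swap (f : nat -> nat -> C) n m :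
  csum (fun j => csum (fun k => f j k) n) m = csum (fun k => csum (fun j => f j k) m) n.
Proof.
revert n. induction m; intros n; simpl. reflexivity.
rewrite IHm. rewrite <- csum_plus. reflexivity.
Qed.

Lemma csum_pick k n (X : C) : (k <= n)%nat -> csum (fun l => if Nat.eqb k l then X else RtoC 0) n = X.
Proof.
induction n; intros Hk; simpl.
- replace k with 0%nat by lia. reflexivity.
- destruct (Nat.eqb_spec k (S n)).
  + subst. rewrite csum_zero. ring. intros j Hj. destruct (Nat.eqb_spec (S n) j); [lia|reflexivity].
  + rewrite IHn by lia. ring.
Qed.

Lemma RtoC_sum f n : RtoC (sum_f_R0 f n) = csum (fun k => RtoC (f k)) n.
Proof. induction n; simpl; auto. rewrite RtoC_plus, IHn. reflexivity. Qed.

Lemma parseval (e : nat -> C) (r : R) (L : nat) :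
  sum_f_R0 (fun j => Cmod (csum (tm e (Cmult (RtoC r) (Cpow (om (S L)) j))) L) ^ 2) L
  = INR (S L) * sum_f_R0 (fun k => Cmod (e k) ^ 2 * r ^ (2 * k)) L.
Proof.
apply RtoC_inj.
set (w := om (S L)).
set (u := fun k => Cmult (e k) (RtoC (r ^ k))).
assert (S1 : forall j, csum (tm e (Cmult (RtoC r) (Cpow w j))) L = csum (fun k => Cmult (u k) (Cpow (Cpow w k) j)) L).
{ intros j. apply csum_ext_loc. intros k _. unfold tm, u. rewrite Cpow_mult_l, <- RtoC_pow.
  rewrite <- !Cpow_mult_r, Nat.mul_comm. ring. }
rewrite RtoC_sum.
transitivity (csum (fun j => csum (fun k => csum (fun l => Cmult (Cmult (u k) (Cconj (u l))) (Cpow (zeta (S L) k l) j)) L) L) L).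
{ apply csum_ext_loc. intros j _. rewrite S1. rewrite <- conj_mult_self.
  rewrite csum_conj, csum_mult_r. apply csum_ext_loc. intros k _.
  rewrite <- csum_mult_l. apply csum_ext_loc. intros l _.
  unfold zeta. rewrite Cpow_mult_l, <- Cpow_conj, Cmult_conj. fold w.
  rewrite <- !Cpow_mult_r, (Nat.mul_comm l j), (Nat.mul_comm k j). ring. }
rewrite csum_swap.
transitivity (csum (fun k => Cmult (Cmult (u k) (Cconj (u k))) (RtoC (INR (S L)))) L).
{ apply csum_ext_loc. intros k Hk. rewrite csum_swap.
  transitivity (csum (fun l => if Nat.eqb k l then Cmult (Cmult (u k) (Cconj (u k))) (RtoC (INR (S L))) else RtoC 0) L).
  - apply csum_ext_loc. intros l Hl.
    rewrite csum_mult_l. rewrite zeta_sum by lia.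
    destruct (Nat.eqb_spec k l). subst. reflexivity. ring.
  - apply csum_pick. auto. }
rewrite RtoC_mult, RtoC_sum, Cmult_comm, csum_mult_r. apply csum_ext_loc. intros k _.
rewrite conj_mult_self. unfold u. rewrite Cmod_mult, Cmod_R, RtoC_mult.
f_equal. rewrite <- RtoC_mult. f_equal. rewrite Rpow_mult_distr, pow2_abs, <- pow_mult, (Nat.mul_comm k 2). reflexivity.
Qed.

Lemma sum_mono_nonneg (f : nat -> R) m n : (forall k, 0 <= f k) -> (m <= n)%nat ->
  sum_f_R0 f m <= sum_f_R0 f n.
Proof.
intros Hf H. induction H. lra. simpl. specialize (Hf (S m0)). lra.
Qed.

Lemma is_series_lim_seq (w : nat -> R) W : is_series w W -> is_lim_seq (fun n => sum_f_R0 w n) W.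
Proof.
intros H. eapply is_lim_seq_ext; [|exact H]. intros n. simpl. apply sum_n_Reals.
Qed.

Lemma series_partial_conv (w : nat -> R) W : is_series w W ->
  forall eps, 0 < eps -> exists N, forall n, (N <= n)%nat -> Rabs (sum_f_R0 w n - W) < eps.
Proof.
intros H eps He. apply is_series_lim_seq in H. apply is_lim_seq_spec in H.
destruct (H (mkposreal eps He)) as [N HN]. exists N. intros n Hn. apply (HN n Hn).
Qed.

Lemma series_partial_le (w : nat -> R) W : (forall k, 0 <= w k) -> is_series w W ->
  forall n, sum_f_R0 w n <= W.
Proof.
intros Hw H n. apply is_series_lim_seq in H.
assert (Rbar_le (sum_f_R0 w n) W).
{ apply (is_lim_seq_le_loc (fun _ => sum_f_R0 w n) (fun m => sum_f_R0 w m)).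
  exists n. intros m Hm. apply sum_mono_nonneg; auto. apply is_lim_seq_const. exact H. }
exact H0.
Qed.

Lemma lim_bound_C (u : nat -> C) U c B L : is_series u U ->
  (forall n, (L <= n)%nat -> Cmod (Cminus (csum u n) c) <= B) -> Cmod (Cminus U c) <= B.
Proof.
intros H HB. apply is_series_C in H as [H1 H2].
apply Rnot_lt_le. intros Hlt. set (d := Cmod (Cminus U c) - B).
assert (Hd : 0 < d / 2) by (unfold d; lra).
destruct (series_partial_conv _ _ H1 _ Hd) as [N1 HN1].
destruct (series_partial_conv _ _ H2 _ Hd) as [N2 HN2].
set (n := max L (max N1 N2)).
specialize (HN1 n ltac:(lia)). specialize (HN2 n ltac:(lia)). specialize (HB n ltac:(lia)).
rewrite <- Re_csum in HN1. rewrite <- Im_csum in HN2.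
assert (Cmod (Cminus U (csum u n)) < d).
{ eapply Rle_lt_trans. apply Cmod_le_re_im.
  rewrite <- Rabs_Ropp in HN1. rewrite <- Rabs_Ropp in HN2.
  replace (Re (Cminus U (csum u n))) with (- (Re (csum u n) - Re U)) by (destruct U as [u1 u2]; destruct (csum u n) as [v1 v2]; unfold Cminus, Copp, Cplus; simpl; ring).
  replace (Im (Cminus U (csum u n))) with (- (Im (csum u n) - Im U)) by (destruct U as [u1 u2]; destruct (csum u n) as [v1 v2]; unfold Cminus, Copp, Cplus; simpl; ring).
  lra. }
assert (Cmod (Cminus U c) <= Cmod (Cminus U (csum u n)) + Cmod (Cminus (csum u n) c)).
{ replace (Cminus U c) with (Cplus (Cminus U (csum u n)) (Cminus (csum u n) c)) by ring.
  apply Cmod_triangle. }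
unfold d in *. lra.
Qed.

Lemma csum_split f L n : (L <= n)%nat ->
  Cminus (csum f n) (csum f L) = csum (fun k => if Nat.leb k L then RtoC 0 else f k) n.
Proof.
intros H. induction H.
- rewrite (csum_zero (fun k => if Nat.leb k L then RtoC 0 else f k)). ring. intros k Hk. destruct (Nat.leb_spec k L); [reflexivity|lia].
- cbn [csum]. rewrite <- IHle. destruct (Nat.leb_spec (S m) L); [lia|]. ring.
Qed.

Lemma sum_split_R (f : nat -> R) L n : (L <= n)%nat ->
  sum_f_R0 f n - sum_f_R0 f L = sum_f_R0 (fun k => if Nat.leb k L then 0 else f k) n.
Proof.
intros H. induction H.
- rewrite (sum_eq (fun k => if Nat.leb k L then 0 else f k) (fun _ => 0) L). rewrite sum_cte. ring. intros k Hk. destruct (Nat.leb_spec k L); [reflexivity|lia].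
- cbn [sum_f_R0]. rewrite <- IHle. destruct (Nat.leb_spec (S m) L); [lia|]. ring.
Qed.

Lemma tail_C (u : nat -> C) U (w : nat -> R) W L : is_series u U -> is_series w W ->
  (forall k, Cmod (u k) <= w k) -> Cmod (Cminus U (csum u L)) <= W - sum_f_R0 w L.
Proof.
intros Hu Hw Hle. apply (lim_bound_C u U _ _ L Hu). intros n Hn.
assert (Hw0 : forall k, 0 <= w k) by (intros k; eapply Rle_trans; [apply Cmod_ge_0|apply Hle]).
pose proof (series_partial_le w W Hw0 Hw n).
rewrite csum_split by auto.
eapply Rle_trans. apply Cmod_csum_le.
assert (sum_f_R0 (fun k => Cmod (if Nat.leb k L then RtoC 0 else u k)) n <= sum_f_R0 w n - sum_f_R0 w L).
{ rewrite sum_split_R by auto. apply sum_Rle. intros k _. destruct (Nat.leb k L).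
  rewrite Cmod_0; lra. apply Hle. }
lra.
Qed.

Lemma contraction c phi d h r B :
  PS c phi -> (forall z, Cmod z < 1 -> Cmod (phi z) <= 1) -> PS d h -> 0 <= r < 1 ->
  (forall L, sum_f_R0 (fun k => Cmod (d k) ^ 2 * r ^ (2 * k)) L <= B) ->
  forall K, sum_f_R0 (fun k => Cmod (conv c d k) ^ 2 * r ^ (2 * k)) K <= B.
Proof.
intros Hc Hphi Hd Hr HB K.
set (G := conv c d).
assert (HG : PS G (fun z => Cmult (phi z) (h z))) by (apply PS_mult; auto).
assert (Hrc : Cmod (RtoC r) < 1) by (rewrite Cmod_R, Rabs_right; lra).
assert (Hrc' : Cmod (RtoC r) = r) by (rewrite Cmod_R, Rabs_right; lra).
set (wG := fun k => Cmod (G k) * r ^ k). set (wD := fun k => Cmod (d k) * r ^ k).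
assert (EG : ex_series wG).
{ eapply ex_series_ext; [|apply (PS_AC G _ (RtoC r) HG Hrc)]. intros k. unfold wG. rewrite Hrc'. reflexivity. }
assert (ED : ex_series wD).
{ eapply ex_series_ext; [|apply (PS_AC d _ (RtoC r) Hd Hrc)]. intros k. unfold wD. rewrite Hrc'. reflexivity. }
destruct EG as [SG HSG]. destruct ED as [SD HSD].
assert (wG0 : forall k, 0 <= wG k).
{ intros k. unfold wG. apply Rmult_le_pos. apply Cmod_ge_0. apply pow_le; lra. }
assert (wD0 : forall k, 0 <= wD k).
{ intros k. unfold wD. apply Rmult_le_pos. apply Cmod_ge_0. apply pow_le; lra. }
assert (SD0 : 0 <= SD).
{ pose proof (series_partial_le wD SD wD0 HSD 0). simpl in H. pose proof (wD0 0%nat). lra. }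
apply Rle_plus_epsilon. intros eps Heps.
set (e1 := Rmin 1 (eps / (4 * SD + 4))).
assert (He1 : 0 < e1).
{ unfold e1. apply Rmin_glb_lt. lra. apply Rdiv_lt_0_compat; lra. }
assert (He1' : e1 <= 1) by apply Rmin_l.
assert (He1'' : e1 * (4 * SD + 4) <= eps).
{ assert (e1 <= eps / (4 * SD + 4)) by apply Rmin_r.
  apply (Rmult_le_compat_r (4 * SD + 4)) in H; [|lra].
  unfold Rdiv in H. rewrite Rmult_assoc, Rinv_l in H; lra. }
destruct (series_partial_conv _ _ HSG e1 He1) as [L1 HL1].
destruct (series_partial_conv _ _ HSD e1 He1) as [L2 HL2].
set (L := max K (max L1 L2)).
set (x := fun j => Cmult (RtoC r) (Cpow (om (S L)) j)).
assert (Hpt : forall j, Cmod (csum (tm G (x j)) L) ^ 2 <= Cmod (csum (tm d (x j)) L) ^ 2 + e1 * (4 * SD + 4)).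
{ intros j. assert (Hxr : Cmod (x j) = r).
  { unfold x. rewrite Cmod_mult, Cmod_om_pow, Hrc'. ring. }
  assert (Hx : Cmod (x j) < 1) by lra.
  assert (T1 := tail_C (tm G (x j)) _ wG SG L (HG _ Hx) HSG).
  assert (T2 := tail_C (tm d (x j)) _ wD SD L (Hd _ Hx) HSD).
  assert (T1' : Cmod (Cminus (Cmult (phi (x j)) (h (x j))) (csum (tm G (x j)) L)) < e1).
  { eapply Rle_lt_trans. apply T1. intros k. rewrite Cmod_tm, Hxr. unfold wG. lra.
    specialize (HL1 L ltac:(lia)). pose proof (series_partial_le wG SG wG0 HSG L).
    rewrite Rabs_left1 in HL1 by lra. lra. }
  assert (T2' : Cmod (Cminus (h (x j)) (csum (tm d (x j)) L)) < e1).
  { eapply Rle_lt_trans. apply T2. intros k. rewrite Cmod_tm, Hxr. unfold wD. lra.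
    specialize (HL2 L ltac:(lia)). pose proof (series_partial_le wD SD wD0 HSD L).
    rewrite Rabs_left1 in HL2 by lra. lra. }
  set (PG := csum (tm G (x j)) L) in *. set (Pd := csum (tm d (x j)) L) in *.
  assert (A1 : Cmod PG <= Cmod (Cmult (phi (x j)) (h (x j))) + e1).
  { replace PG with (Cminus (Cmult (phi (x j)) (h (x j))) (Cminus (Cmult (phi (x j)) (h (x j))) PG)) by ring.
    eapply Rle_trans. unfold Cminus at 1. apply Cmod_triangle. rewrite Cmod_opp. lra. }
  assert (A2 : Cmod (Cmult (phi (x j)) (h (x j))) <= Cmod (h (x j))).
  { rewrite Cmod_mult. pose proof (Hphi _ Hx). pose proof (Cmod_ge_0 (h (x j))). nra. }
  assert (A3 : Cmod (h (x j)) <= Cmod Pd + e1).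
  { replace (h (x j)) with (Cplus Pd (Cminus (h (x j)) Pd)) by ring.
    eapply Rle_trans. apply Cmod_triangle. lra. }
  assert (A4 : Cmod Pd <= SD).
  { eapply Rle_trans. apply Cmod_csum_le. eapply Rle_trans; [|apply (series_partial_le wD SD wD0 HSD L)].
    apply sum_Rle. intros k _. rewrite Cmod_tm, Hxr. unfold wD; lra. }
  pose proof (Cmod_ge_0 PG). pose proof (Cmod_ge_0 Pd).
  assert (Cmod PG <= Cmod Pd + 2 * e1) by lra.
  assert (Cmod PG ^ 2 <= (Cmod Pd + 2 * e1) ^ 2).
  { apply pow_incr. lra. }
  nra. }
assert (Hsum : sum_f_R0 (fun j => Cmod (csum (tm G (x j)) L) ^ 2) L <=
               sum_f_R0 (fun j => Cmod (csum (tm d (x j)) L) ^ 2 + e1 * (4 * SD + 4)) L).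
{ apply sum_Rle. intros; apply Hpt. }
rewrite plus_sum, sum_cte in Hsum. unfold x in Hsum.
rewrite !parseval in Hsum.
assert (HN : 0 < INR (S L)) by (apply lt_0_INR; lia).
assert (sum_f_R0 (fun k => Cmod (G k) ^ 2 * r ^ (2 * k)) L <=
        sum_f_R0 (fun k => Cmod (d k) ^ 2 * r ^ (2 * k)) L + e1 * (4 * SD + 4)).
{ apply (Rmult_le_reg_l (INR (S L))); auto. lra. }
specialize (HB L).
assert (sum_f_R0 (fun k => Cmod (G k) ^ 2 * r ^ (2 * k)) K <= sum_f_R0 (fun k => Cmod (G k) ^ 2 * r ^ (2 * k)) L).
{ apply sum_mono_nonneg. intros k. apply Rmult_le_pos. apply pow2_ge_0. apply pow_le; lra. lia. }
lra.
Qed.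

Lemma sum_only0 (f : nat -> R) K : (forall k, (0 < k)%nat -> f k = 0) -> sum_f_R0 f K = f 0%nat.
Proof. intros H. induction K; simpl; auto. rewrite IHK, (H (S K)) by lia. ring. Qed.

Lemma conv_0 c d : c 0%nat = RtoC 0 -> conv c d 0 = RtoC 0.
Proof. intros H. unfold conv. simpl. rewrite H. ring. Qed.

Lemma littlewood_r c phi : PS c phi -> (forall z, Cmod z < 1 -> Cmod (phi z) <= 1) -> c 0%nat = RtoC 0 ->
  forall L a r, 0 <= r < 1 -> forall K,
  sum_f_R0 (fun k => Cmod (hor c a L k) ^ 2 * r ^ (2 * k)) K <= sum_f_R0 (fun n => Cmod (a n) ^ 2) L.
Proof.
intros Hc Hphi Hc0 L. induction L; intros a r Hr K.
- simpl hor. rewrite sum_only0. simpl. unfold delta0. simpl. lra.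
  intros k Hk. unfold delta0. destruct k. lia. simpl. rewrite Cmod_0. ring.
- simpl hor.
  set (D := hor c (shift a) L).
  assert (E : forall k, Cmod (Cplus (delta0 (a 0%nat) k) (conv c D k)) ^ 2 * r ^ (2 * k) =
     (if Nat.eqb k 0 then Cmod (a 0%nat) ^ 2 else 0) + Cmod (conv c D k) ^ 2 * r ^ (2 * k)).
  { intros k. destruct k. simpl. unfold delta0. simpl. rewrite conv_0 by auto. rewrite Cmod_0.
    replace (Cplus (a 0%nat) (RtoC 0)) with (a 0%nat) by ring. ring.
    unfold delta0. simpl. replace (Cplus (RtoC 0) (conv c D (S k))) with (conv c D (S k)) by ring. ring. }
  rewrite (sum_eq _ _ K (fun k _ => E k)), plus_sum.
  rewrite sum_only0 by (intros k Hk; destruct k; [lia|reflexivity]). simpl Nat.eqb. cbv iota.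
  rewrite (decomp_sum (fun n => Cmod (a n) ^ 2) (S L)) by lia. simpl Init.Nat.pred.
  apply Rplus_le_compat_l.
  apply (contraction c phi D (horv phi (shift a) L) r); auto.
  apply PS_hor; auto.
  intros L'. apply IHL; auto.
Qed.

Lemma bernoulli t n : 0 <= t <= 1 -> 1 - INR n * t <= (1 - t) ^ n.
Proof.
intros Ht. induction n. simpl. lra.
rewrite S_INR. simpl. assert (0 <= (1 - t) ^ n) by (apply pow_le; lra).
assert (0 <= INR n) by apply pos_INR. nra.
Qed.

Lemma pow_decr_exp r m n : 0 <= r <= 1 -> (m <= n)%nat -> r ^ n <= r ^ m.
Proof.
intros Hr H. induction H. lra. simpl. assert (0 <= r ^ m0) by (apply pow_le; lra). nra.
Qed.

Lemma littlewood c phi : PS c phi -> (forall z, Cmod z < 1 -> Cmod (phi z) <= 1) -> c 0%nat = RtoC 0 ->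
  forall L a K,
  sum_f_R0 (fun k => Cmod (hor c a L k) ^ 2) K <= sum_f_R0 (fun n => Cmod (a n) ^ 2) L.
Proof.
intros Hc Hphi Hc0 L a K.
set (S := sum_f_R0 (fun k => Cmod (hor c a L k) ^ 2) K).
set (B := sum_f_R0 (fun n => Cmod (a n) ^ 2) L).
assert (S0 : 0 <= S) by (apply cond_pos_sum; intros; apply pow2_ge_0).
assert (Hd : forall d, 0 < d <= 1 -> (1 - INR (2 * K) * d) * S <= B).
{ intros d Hd. set (r := 1 - d).
  assert (Hr : 0 <= r < 1) by (unfold r; lra).
  pose proof (littlewood_r c phi Hc Hphi Hc0 L a r Hr K) as H. fold B in H.
  eapply Rle_trans; [|exact H]. unfold S. rewrite scal_sum.
  apply sum_Rle. intros k Hk.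
  assert (1 - INR (2 * K) * d <= r ^ (2 * k)).
  { eapply Rle_trans. apply (bernoulli d (2 * K)). lra.
    apply pow_decr_exp. unfold r; lra. lia. }
  pose proof (pow2_ge_0 (Cmod (hor c a L k))). nra. }
apply Rle_plus_epsilon. intros eps He.
set (d := Rmin 1 (eps / (INR (2 * K) * S + 1))).
assert (Hd0 : 0 < d <= 1).
{ split. unfold d. apply Rmin_glb_lt. lra. apply Rdiv_lt_0_compat. lra.
  pose proof (pos_INR (2 * K)). nra. apply Rmin_l. }
specialize (Hd d Hd0).
assert (d * (INR (2 * K) * S) <= eps).
{ assert (d <= eps / (INR (2 * K) * S + 1)) by apply Rmin_r.
  pose proof (pos_INR (2 * K)). assert (0 <= INR (2 * K) * S) by nra.
  apply (Rmult_le_compat_r (INR (2 * K) * S + 1)) in H; [|lra].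
  unfold Rdiv in H. rewrite Rmult_assoc, Rinv_l in H by lra. nra. }
nra.
Qed.

Fixpoint powc (c : nat -> C) (n : nat) : nat -> C :=
  match n with O => delta0 (RtoC 1) | S m => conv c (powc c m) end.

Lemma conv_plus_r c d1 d2 n : conv c (fun k => Cplus (d1 k) (d2 k)) n = Cplus (conv c d1 n) (conv c d2 n).
Proof. unfold conv. rewrite <- csum_plus. apply csum_ext_loc. intros. ring. Qed.

Lemma conv_scal_r c s d n : conv c (fun k => Cmult s (d k)) n = Cmult s (conv c d n).
Proof. unfold conv. rewrite <- csum_mult_l. apply csum_ext_loc. intros. ring. Qed.

Lemma conv_delta0_r c x n : conv c (delta0 x) n = Cmult (c n) x.
Proof.
unfold conv. rewrite <- (csum_pick n n (Cmult (c n) x)) by lia.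
apply csum_ext_loc. intros k Hk. unfold delta0.
destruct (Nat.eqb_spec (n - k) 0); destruct (Nat.eqb_spec n k); try lia.
subst; reflexivity. ring.
Qed.

Lemma conv_ext_r c d1 d2 n : (forall k, (k <= n)%nat -> d1 k = d2 k) -> conv c d1 n = conv c d2 n.
Proof. intros H. unfold conv. apply csum_ext_loc. intros k Hk. rewrite H by lia. reflexivity. Qed.

Lemma hor_succ c a L k : hor c a (S L) k = Cplus (hor c a L k) (Cmult (a (S L)) (powc c (S L) k)).
Proof.
revert a k. induction L; intros a k.
- simpl. rewrite !conv_delta0_r. unfold shift. ring.
- change (hor c a (S (S L)) k) with (Cplus (delta0 (a O) k) (conv c (hor c (shift a) (S L)) k)).
  rewrite (conv_ext_r c _ (fun j => Cplus (hor c (shift a) L j) (Cmult (shift a (S L)) (powc c (S L) j)))).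
  rewrite conv_plus_r, conv_scal_r. simpl. unfold shift. ring.
  intros j _. apply IHL.
Qed.

Lemma powc_low c n k : c 0%nat = RtoC 0 -> (k < n)%nat -> powc c n k = RtoC 0.
Proof.
intros Hc0. revert k. induction n; intros k Hk. lia.
simpl. unfold conv. apply csum_zero. intros i Hi. destruct i.
- rewrite Hc0. ring.
- rewrite IHn by lia. ring.
Qed.

Lemma hor_stable c a L L' k : c 0%nat = RtoC 0 -> (L <= L')%nat -> (k <= L)%nat -> hor c a L' k = hor c a L k.
Proof.
intros Hc0 H Hk. induction H. reflexivity.
rewrite hor_succ, IHle, powc_low by (auto; lia). ring.
Qed.

Lemma hor_ext c a a' L k : (forall n, (n <= L)%nat -> a n = a' n) -> hor c a L k = hor c a' L k.
Proof.
revert a a' k. induction L; intros a a' k H; simpl.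
- rewrite H by lia. reflexivity.
- rewrite H by lia. f_equal. apply conv_ext_r. intros j _. apply IHL. intros n Hn. unfold shift. apply H. lia.
Qed.

Lemma hor_lin c a a' L k : hor c (fun n => Cminus (a n) (a' n)) L k = Cminus (hor c a L k) (hor c a' L k).
Proof.
revert a a' k. induction L; intros a a' k; simpl.
- unfold delta0. destruct (Nat.eqb k 0); ring.
- rewrite (conv_ext_r c _ (fun j => Cplus (hor c (shift a) L j) (Cmult (RtoC (-1)) (hor c (shift a') L j)))).
  rewrite conv_plus_r, conv_scal_r. unfold delta0. destruct (Nat.eqb k 0).
  + replace (RtoC (-1)) with (Copp (RtoC 1)). ring. unfold RtoC, Copp; simpl. f_equal; ring.
  + replace (RtoC (-1)) with (Copp (RtoC 1)). ring. unfold RtoC, Copp; simpl. f_equal; ring.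
  + intros j _. transitivity (hor c (fun n => Cminus (shift a n) (shift a' n)) L j). reflexivity.
    rewrite IHL. replace (RtoC (-1)) with (Copp (RtoC 1)). ring. unfold RtoC, Copp; simpl. f_equal; ring.
Qed.

Lemma hor_zero c a L k : (forall n, (n <= L)%nat -> a n = RtoC 0) -> hor c a L k = RtoC 0.
Proof.
intros H. rewrite (hor_ext c a (fun n => Cminus (RtoC 0) (RtoC 0))).
rewrite hor_lin. ring. intros n Hn. rewrite H by auto. ring.
Qed.

Definition comp (c a : nat -> C) (k : nat) : C := hor c a k k.

Lemma comp_eq c a k L : c 0%nat = RtoC 0 -> (k <= L)%nat -> comp c a k = hor c a L k.
Proof. intros. unfold comp. symmetry. apply hor_stable; auto. Qed.

Definition symb_ok (c : nat -> C) (phi : C -> C) : Prop :=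
  PS c phi /\ (forall z, Cmod z < 1 -> Cmod (phi z) <= 1) /\ c 0%nat = RtoC 0.

Lemma abel (x b : nat -> R) K :
  sum_f_R0 (fun k => x k * b k) K =
  sum_f_R0 (fun j => (b j - b (S j)) * sum_f_R0 x j) K + b (S K) * sum_f_R0 x K.
Proof. induction K; simpl. ring. rewrite IHK. ring. Qed.

Lemma comp_H2 c phi a j : symb_ok c phi ->
  sum_f_R0 (fun k => Cmod (comp c a k) ^ 2) j <= sum_f_R0 (fun n => Cmod (a n) ^ 2) j.
Proof.
intros [Hc [Hphi Hc0]].
rewrite (sum_eq _ (fun k => Cmod (hor c a j k) ^ 2)).
apply (littlewood c phi); auto.
intros k Hk. rewrite (comp_eq c a k j) by auto. reflexivity.
Qed.

Lemma comp_weighted c phi a (b : nat -> R) K : symb_ok c phi ->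
  (forall n, 0 <= b n) -> (forall n, b (S n) <= b n) ->
  sum_f_R0 (fun k => Cmod (comp c a k) ^ 2 * b k) K <= sum_f_R0 (fun n => Cmod (a n) ^ 2 * b n) K.
Proof.
intros Hs Hb0 Hb. rewrite !(abel _ b). apply Rplus_le_compat.
- apply sum_Rle. intros j _. apply Rmult_le_compat_l. specialize (Hb j); lra.
  apply (comp_H2 c phi); auto.
- apply Rmult_le_compat_l; auto. apply (comp_H2 c phi); auto.
Qed.

Lemma is_series_C_unique (u : nat -> C) l1 l2 : is_series u l1 -> is_series u l2 -> l1 = l2.
Proof.
intros H1 H2. apply is_series_C in H1 as [A1 B1]. apply is_series_C in H2 as [A2 B2].
apply is_series_unique in A1, A2, B1, B2. destruct l1, l2. simpl in *. congruence.
Qed.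

Lemma term_le_series (w : nat -> R) W : (forall k, 0 <= w k) -> is_series w W -> forall k, w k <= W.
Proof.
intros Hw H k. eapply Rle_trans; [|apply (series_partial_le w W Hw H k)].
destruct k. simpl; lra. simpl. pose proof (cond_pos_sum w k (fun i => Hw i)). lra.
Qed.

Lemma csum_last f m : (forall k, (k < m)%nat -> f k = RtoC 0) -> csum f m = f m.
Proof.
intros H. destruct m. reflexivity. simpl. rewrite csum_zero. ring. intros; apply H; lia.
Qed.

Lemma PS_zero_step e m : PS e (fun _ => RtoC 0) -> (forall i, (i < m)%nat -> e i = RtoC 0) -> e m = RtoC 0.
Proof.
intros H Hi.
assert (Hh : Cmod (RtoC (1/2)) < 1) by (rewrite Cmod_R, Rabs_right; lra).
assert (Hh' : Cmod (RtoC (1/2)) = 1/2) by (rewrite Cmod_R, Rabs_right; lra).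
destruct (PS_AC e _ _ H Hh) as [S HS]. rewrite Hh' in HS.
assert (Hw0 : forall k, 0 <= Cmod (e k) * (1/2) ^ k).
{ intros k. apply Rmult_le_pos. apply Cmod_ge_0. apply pow_le; lra. }
pose proof (term_le_series _ _ Hw0 HS) as HT.
assert (S0 : 0 <= S) by (eapply Rle_trans; [apply (Hw0 0%nat)|apply HT]).
assert (Key : forall x, 0 < x <= 1/4 -> Cmod (e m) <= 2 ^ (m + 2) * S * x).
{ intros x Hx.
  assert (Hxc : Cmod (RtoC x) < 1) by (rewrite Cmod_R, Rabs_right; lra).
  assert (Hxc' : Cmod (RtoC x) = x) by (rewrite Cmod_R, Rabs_right; lra).
  assert (Hg : is_series (fun k => S * (2 * x) ^ k) (S * / (1 - 2 * x))).
  { apply (is_series_scal_l (V:=R_NormedModule) S). apply is_series_geom. rewrite Rabs_right; lra. }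
  assert (Hle : forall k, Cmod (tm e (RtoC x) k) <= S * (2 * x) ^ k).
  { intros k. rewrite Cmod_tm, Hxc'. specialize (HT k).
    replace (S * (2 * x) ^ k) with (S * (2 ^ k * x ^ k)) by (rewrite Rpow_mult_distr; ring).
    assert (Cmod (e k) <= S * 2 ^ k).
    { replace (Cmod (e k)) with (Cmod (e k) * (1/2) ^ k * 2 ^ k).
      apply Rmult_le_compat_r. apply pow_le; lra. exact HT.
      rewrite Rmult_assoc, <- Rpow_mult_distr. replace (1/2*2) with 1 by field. rewrite pow1. ring. }
    assert (0 <= x ^ k) by (apply pow_le; lra). nra. }
  pose proof (tail_C _ _ _ _ m (H _ Hxc) Hg Hle) as T.
  rewrite csum_last in T by (intros k Hk; unfold tm; rewrite Hi by auto; ring).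
  unfold tm in T. rewrite Cmult_comm in T.
  replace (Cminus (RtoC 0) (Cmult (e m) (Cpow (RtoC x) m))) with (Copp (Cmult (e m) (Cpow (RtoC x) m))) in T by ring.
  rewrite Cmod_opp, Cmod_mult, Cmod_pow, Hxc' in T.
  replace (sum_f_R0 (fun k => S * (2 * x) ^ k) m) with (S * sum_f_R0 (fun k => (2*x)^k) m) in T
    by (rewrite scal_sum; apply sum_eq; intros; ring).
  assert (G : sum_f_R0 (fun k => (2 * x) ^ k) m = (1 - (2 * x) ^ (m + 1)) / (1 - 2 * x)).
  { pose proof (GP_finite (2 * x) m). apply (Rmult_eq_reg_r (2 * x - 1)); [|lra].
    rewrite H0. field. lra. }
  rewrite G in T.
  replace (S * / (1 - 2 * x) - S * ((1 - (2 * x) ^ (m + 1)) / (1 - 2 * x))) with (S * (2 * x) ^ (m + 1) / (1 - 2 * x)) in T by (field; lra).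
  assert (Hxm : 0 < x ^ m) by (apply pow_lt; lra).
  rewrite Rpow_mult_distr in T. replace (x ^ (m + 1)) with (x ^ m * x) in T by (rewrite pow_add; ring).
  replace (2 ^ (m + 2)) with (2 ^ (m + 1) * 2) by (rewrite !pow_add; simpl; ring).
  assert (Cmod (e m) * x ^ m <= (2 ^ (m + 1) * 2 * S * x) * x ^ m).
  { eapply Rle_trans. exact T.
    assert (0 <= S * (2 ^ (m + 1) * (x ^ m * x))).
    { apply Rmult_le_pos. auto. apply Rmult_le_pos. apply pow_le; lra. apply Rmult_le_pos; lra. }
    assert (S * (2 ^ (m + 1) * (x ^ m * x)) / (1 - 2 * x) <= 2 * (S * (2 ^ (m + 1) * (x ^ m * x)))).
    { apply (Rmult_le_reg_r (1 - 2 * x)). lra. unfold Rdiv. rewrite Rmult_assoc, Rinv_l by lra. nra. }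
    nra. }
  apply (Rmult_le_reg_r (x ^ m)); auto. }
apply Cmod_eq_0. apply Rle_antisym; [|apply Cmod_ge_0].
apply Rle_plus_epsilon. intros eps He. rewrite Rplus_0_l.
set (C0 := 2 ^ (m + 2) * S).
assert (C00 : 0 <= C0) by (unfold C0; apply Rmult_le_pos; auto; apply pow_le; lra).
set (x := Rmin (1/4) (eps / (C0 + 1))).
assert (Hx : 0 < x <= 1/4).
{ split. unfold x. apply Rmin_glb_lt. lra. apply Rdiv_lt_0_compat; lra. apply Rmin_l. }
specialize (Key x Hx). fold C0 in Key.
assert (x <= eps / (C0 + 1)) by apply Rmin_r.
apply (Rmult_le_compat_r (C0 + 1)) in H0; [|lra].
unfold Rdiv in H0. rewrite Rmult_assoc, Rinv_l in H0 by lra. nra.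
Qed.

Lemma PS_zero e : PS e (fun _ => RtoC 0) -> forall m, e m = RtoC 0.
Proof.
intros H. assert (forall m i, (i <= m)%nat -> e i = RtoC 0).
{ induction m; intros i Hi.
  - apply PS_zero_step; auto. intros; lia.
  - destruct (Nat.eq_dec i (S m)). subst. apply PS_zero_step; auto. intros; apply IHm; lia.
    apply IHm; lia. }
intros m. apply (H0 m); lia.
Qed.

Lemma PS_unique d d' g : PS d g -> PS d' g -> forall k, d k = d' k.
Proof.
intros H1 H2 k.
assert (H3 : PS (fun k => Cplus (d k) (Cmult (RtoC (-1)) (d' k))) (fun _ => RtoC 0)).
{ eapply PS_ext; [| |apply (PS_plus' _ _ _ _ H1 (PS_scal (RtoC (-1)) _ _ H2))].
  intros; reflexivity. intros z _. simpl.
  replace (RtoC (-1)) with (Copp (RtoC 1)) by (unfold RtoC, Copp; simpl; f_equal; ring). ring. }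
pose proof (PS_zero _ H3 k). 
replace (d k) with (Cplus (Cplus (d k) (Cmult (RtoC (-1)) (d' k))) (d' k)).
rewrite H. ring.
replace (RtoC (-1)) with (Copp (RtoC 1)) by (unfold RtoC, Copp; simpl; f_equal; ring). ring.
Qed.

Lemma weight_geom beta : weight_ok beta -> forall x, 0 <= x < 1 -> ex_series (fun n => x ^ n / beta n).
Proof.
intros [Hpos Hlim] x Hx.
set (u := fun n => Rpower (beta n) (/ INR n)).
set (rho := (1 + x) / 2).
assert (Hr : x < rho < 1) by (unfold rho; lra).
assert (HN : exists N, forall n, (N <= n)%nat -> rho < u n).
{ pose proof (proj2_sig (ex_LimInf_seq u)) as HL. fold (LimInf_seq u) in HL.
  change (Rbar_le (Finite 1) (LimInf_seq u)) in Hlim.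
  destruct (LimInf_seq u) as [l| |] eqn:E; simpl in Hlim, HL.
  - assert (Hp : 0 < l - rho) by lra.
    destruct (HL (mkposreal _ Hp)) as [_ [N HN]]. exists N. intros n Hn. specialize (HN n Hn). simpl in HN. lra.
  - destruct (HL rho) as [N HN]. exists N. auto.
  - contradiction. }
destruct HN as [N HN].
set (N' := S N).
apply (ex_series_incr_n _ N').
apply (ex_series_le (V:=R_CompleteNormedModule) _ (fun k => (x / rho) ^ (N' + k))).
- intros k. change (norm (x ^ (N' + k) / beta (N' + k)%nat)) with (Rabs (x ^ (N' + k) / beta (N' + k)%nat)).
  set (n := (N' + k)%nat).
  assert (Hb : 0 < beta n) by apply Hpos.
  assert (Hun : rho < u n) by (apply HN; unfold n, N'; lia).
  assert (Hbn : rho ^ n < beta n).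
  { rewrite <- Rpower_pow by lra.
    replace (beta n) with (Rpower (u n) (INR n)).
    apply Rlt_Rpower_l. apply lt_0_INR. unfold n, N'; lia. lra.
    unfold u. rewrite Rpower_mult. rewrite Rinv_l. apply Rpower_1; auto.
    apply not_0_INR. unfold n, N'; lia. }
  assert (0 < rho ^ n) by (apply pow_lt; lra).
  assert (0 <= x ^ n) by (apply pow_le; lra).
  rewrite Rabs_right by (apply Rle_ge; unfold Rdiv; apply Rmult_le_pos; [lra|left; apply Rinv_0_lt_compat; lra]).
  unfold Rdiv. rewrite Rpow_mult_distr, pow_inv. apply Rmult_le_compat_l; auto.
  apply Rinv_le_contravar; lra.
- apply (ex_series_incr_n (fun k => (x / rho) ^ k) N'). apply ex_series_geom.
  rewrite Rabs_right. apply (Rmult_lt_reg_r rho); try lra. unfold Rdiv. rewrite Rmult_assoc, Rinv_l; lra.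
  apply Rle_ge. unfold Rdiv. apply Rmult_le_pos; [lra|left; apply Rinv_0_lt_compat; lra].
Qed.

Lemma amgm (u v b t : R) : 0 < b -> 0 < t -> u * v <= (t * (u ^ 2 * b) + v ^ 2 / (t * b)) / 2.
Proof.
intros Hb Ht.
assert (0 < t * b) by nra.
assert (0 <= (t * b * u - v) ^ 2) by apply pow2_ge_0.
apply (Rmult_le_reg_r (2 * (t * b))). nra.
replace ((t * (u ^ 2 * b) + v ^ 2 / (t * b)) / 2 * (2 * (t * b))) with ((t * b * u) ^ 2 + v ^ 2) by (field; lra).
nra.
Qed.

Lemma bounded_ex_series (w : nat -> R) B : (forall k, 0 <= w k) -> (forall n, sum_f_R0 w n <= B) -> ex_series w.
Proof.
intros Hw HB.
destruct (ex_finite_lim_seq_incr (fun n => sum_f_R0 w n) B) as [l Hl].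
- intros n. simpl. specialize (Hw (S n)). lra.
- auto.
- exists l. eapply is_lim_seq_ext in Hl. exact Hl. intros n. simpl. rewrite sum_n_Reals. reflexivity.
Qed.

Lemma series_le_bound (w : nat -> R) W B : is_series w W -> (forall n, sum_f_R0 w n <= B) -> W <= B.
Proof.
intros H HB. apply is_series_lim_seq in H.
assert (Rbar_le W B). { eapply is_lim_seq_le. exact HB. exact H. apply is_lim_seq_const. }
exact H0.
Qed.

Lemma inH2_abs beta a : weight_ok beta -> inH2 beta a -> forall x, 0 <= x < 1 ->
  ex_series (fun n => Cmod (a n) * x ^ n).
Proof.
intros Hw Ha x Hx.
assert (Hg := weight_geom beta Hw (x ^ 2) ltac:(split; [apply pow_le; lra| nra])).
destruct Hw as [Hpos _].
apply (ex_series_le (V:=R_CompleteNormedModule) _ (fun n => (Cmod (a n) ^ 2 * beta n + (x ^ 2) ^ n / beta n) / 2)).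
- intros n. change (norm (Cmod (a n) * x ^ n)) with (Rabs (Cmod (a n) * x ^ n)).
  rewrite Rabs_right by (apply Rle_ge, Rmult_le_pos; [apply Cmod_ge_0|apply pow_le; lra]).
  pose proof (amgm (Cmod (a n)) (x ^ n) (beta n) 1 (Hpos n) Rlt_0_1).
  replace ((x ^ 2) ^ n) with ((x ^ n) ^ 2) by (rewrite <- !pow_mult; f_equal; lia).
  replace (1 * (Cmod (a n) ^ 2 * beta n)) with (Cmod (a n) ^ 2 * beta n) in H by ring.
  replace (1 * beta n) with (beta n) in H by ring. exact H.
- apply (ex_series_scal_r (/2)). apply (ex_series_plus (V:=R_NormedModule)); auto.
Qed.

Lemma inH2_pseries beta a w : weight_ok beta -> inH2 beta a -> Cmod w < 1 -> exists W, is_pseries a w W.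
Proof.
intros Hw Ha Hz.
assert (E := inH2_abs beta a Hw Ha (Cmod w) (conj (Cmod_ge_0 w) Hz)).
assert (E' : ex_series (tm a w)).
{ apply (ex_series_le (V:=C_CompleteNormedModule) _ (fun n => Cmod (a n) * Cmod w ^ n)); auto.
  intros n. change (norm (tm a w n)) with (Cmod (tm a w n)). rewrite Cmod_tm. lra. }
destruct E' as [W HW]. exists W. apply is_pseries_tm. auto.
Qed.

Fixpoint mn (beta : nat -> R) (n : nat) : R :=
  match n with O => beta O | S m => Rmin (mn beta m) (beta (S m)) end.

Lemma mn_le beta n : mn beta n <= beta n.
Proof. destruct n; simpl. lra. apply Rmin_r. Qed.

Lemma mn_decr beta n : mn beta (S n) <= mn beta n.
Proof. simpl. apply Rmin_l. Qed.

Lemma mn_attained beta n : exists m, (m <= n)%nat /\ mn beta n = beta m.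
Proof.
induction n. exists 0%nat; split; auto.
simpl. destruct IHn as [m [Hm E]]. unfold Rmin. destruct (Rle_dec (mn beta n) (beta (S n))).
exists m; split; auto. exists (S n); split; auto.
Qed.

Lemma mn_pos beta : (forall n, 0 < beta n) -> forall n, 0 < mn beta n.
Proof. intros H n. destruct (mn_attained beta n) as [m [_ E]]. rewrite E; auto. Qed.

Definition PL (L : nat) (a : nat -> C) (n : nat) : C := if Nat.leb n L then a n else RtoC 0.

Lemma hor_levels c x L L' k : (forall n, (L < n)%nat -> x n = RtoC 0) -> (L <= L')%nat ->
  hor c x L' k = hor c x L k.
Proof.
intros Hx H. induction H. reflexivity. rewrite hor_succ, IHle, Hx by lia. ring.
Qed.

Lemma hor_comp_PL c a L k : c 0%nat = RtoC 0 -> hor c a L k = comp c (PL L a) k.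
Proof.
intros Hc0. unfold comp. destruct (le_lt_dec k L) as [H|H].
- rewrite (hor_ext c (PL L a) a k k). apply hor_stable; auto.
  intros n Hn. unfold PL. destruct (Nat.leb_spec n L); auto; lia.
- rewrite (hor_levels c (PL L a) L k k). apply hor_ext. intros n Hn. unfold PL.
  destruct (Nat.leb_spec n L); auto; lia.
  intros n Hn. unfold PL. destruct (Nat.leb_spec n L); auto; lia. lia.
Qed.

Lemma comp_diff c a L k : c 0%nat = RtoC 0 ->
  Cminus (comp c a k) (hor c a L k) = comp c (fun n => Cminus (a n) (PL L a n)) k.
Proof.
intros Hc0. rewrite hor_comp_PL by auto. unfold comp. rewrite hor_lin. reflexivity.
Qed.

Lemma csum_shift f L : csum f (S L) = Cplus (f 0%nat) (csum (fun k => f (S k)) L).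
Proof. induction L; simpl. reflexivity. simpl in IHL. rewrite IHL. ring. Qed.

Lemma horv_csum phi a L z : horv phi a L z = csum (tm a (phi z)) L.
Proof.
revert a. induction L; intros a; cbn [horv].
- unfold tm. simpl. ring.
- rewrite IHL, csum_shift. unfold tm at 1. simpl. rewrite <- csum_mult_l.
  f_equal. unfold tm; simpl; ring. apply csum_ext_loc. intros k _. unfold tm, shift. simpl. ring.
Qed.

Lemma csum_conv_C (u : nat -> C) U : is_series u U ->
  forall eps, 0 < eps -> exists N, forall n, (N <= n)%nat -> Cmod (Cminus (csum u n) U) < eps.
Proof.
intros H eps He. apply is_series_C in H as [H1 H2].
destruct (series_partial_conv _ _ H1 (eps/2) ltac:(lra)) as [N1 HN1].
destruct (series_partial_conv _ _ H2 (eps/2) ltac:(lra)) as [N2 HN2].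
exists (max N1 N2). intros n Hn. specialize (HN1 n ltac:(lia)). specialize (HN2 n ltac:(lia)).
rewrite <- Re_csum in HN1. rewrite <- Im_csum in HN2.
eapply Rle_lt_trans. apply Cmod_le_re_im.
replace (Re (Cminus (csum u n) U)) with (Re (csum u n) - Re U) by (destruct U; destruct (csum u n); simpl; ring).
replace (Im (Cminus (csum u n) U)) with (Im (csum u n) - Im U) by (destruct U; destruct (csum u n); simpl; ring).
lra.
Qed.

Lemma c0_of_phi c phi : PS c phi -> c 0%nat = phi (RtoC 0).
Proof.
intros H. assert (Hz : Cmod (RtoC 0) < 1) by (rewrite Cmod_0; lra).
apply (is_series_C_unique (tm c (RtoC 0))); [|apply H; auto].
replace (c 0%nat) with (csum (tm c (RtoC 0)) 0) by (simpl; unfold tm; simpl; ring).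
apply is_series_fin. intros k Hk. unfold tm. destruct k. lia. simpl. ring.
Qed.

Lemma Cmod_0_eq (z : C) : Cmod z <= 0 -> z = RtoC 0.
Proof. intros H. apply Cmod_eq_0. pose proof (Cmod_ge_0 z). lra. Qed.

Lemma forward beta K0 : weight_ok beta -> 1 <= K0 ->
  (forall m n, (n <= m)%nat -> beta m <= K0 * beta n) ->
  forall phi, symbol phi -> phi (RtoC 0) = RtoC 0 -> Cphi_bounded_by beta phi (sqrt K0).
Proof.
intros Hw HK Hdec phi [[c Hc] [Hin _]] H0.
assert (HPS : PS c phi) by (intros z Hz; apply is_pseries_tm; apply Hc; exact Hz).
assert (Hc0 : c 0%nat = RtoC 0) by (rewrite (c0_of_phi c phi HPS); exact H0).
assert (Hs : symb_ok c phi).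
{ split; [auto|split; auto]. intros z Hz. specialize (Hin z Hz). unfold in_disk in Hin. lra. }
pose proof Hw as [Hpos _].
set (bp := fun n => K0 * mn beta n).
assert (bp0 : forall n, 0 <= bp n).
{ intros n. unfold bp. pose proof (mn_pos beta Hpos n). nra. }
assert (bpd : forall n, bp (S n) <= bp n).
{ intros n. unfold bp. pose proof (mn_decr beta n). nra. }
assert (Hbbp : forall n, beta n <= bp n).
{ intros n. destruct (mn_attained beta n) as [m [Hm E]]. unfold bp. rewrite E. apply Hdec; auto. }
assert (Hbpb : forall n, bp n <= K0 * beta n).
{ intros n. unfold bp. pose proof (mn_le beta n). nra. }
assert (Key : forall (x : nat -> C) n,
  sum_f_R0 (fun k => Cmod (comp c x k) ^ 2 * beta k) n <= K0 * sum_f_R0 (fun k => Cmod (x k) ^ 2 * beta k) n).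
{ intros x n. eapply Rle_trans.
  apply (sum_Rle _ (fun k => Cmod (comp c x k) ^ 2 * bp k)). intros k _.
  apply Rmult_le_compat_l. apply pow2_ge_0. auto.
  eapply Rle_trans. apply (comp_weighted c phi x bp n Hs bp0 bpd).
  rewrite scal_sum. apply sum_Rle. intros k _. pose proof (pow2_ge_0 (Cmod (x k))). specialize (Hbpb k). nra. }
intros a Ha.
pose proof Ha as [SA HSA].
assert (g0 : forall k, 0 <= Cmod (a k) ^ 2 * beta k).
{ intros k. apply Rmult_le_pos. apply pow2_ge_0. left; auto. }
assert (SA0 : 0 <= SA) by (eapply Rle_trans; [apply (g0 0%nat)|apply (term_le_series _ _ g0 HSA)]).
set (b := comp c a).
assert (HbB : forall n, sum_f_R0 (fun k => Cmod (b k) ^ 2 * beta k) n <= K0 * SA).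
{ intros n. eapply Rle_trans. apply Key. apply Rmult_le_compat_l. lra.
  apply (series_partial_le _ _ g0 HSA). }
assert (Hb : inH2 beta b).
{ apply (bounded_ex_series _ (K0 * SA)); auto. intros k. apply Rmult_le_pos. apply pow2_ge_0. left; auto. }
exists b. split; [|split; [exact Hb|]].
- intros z Hz. unfold in_disk in Hz.
  assert (Hpz : Cmod (phi z) < 1) by (apply Hin; auto).
  destruct (inH2_pseries beta a (phi z) Hw Ha Hpz) as [W HW]. exists W. split; auto.
  destruct (inH2_pseries beta b z Hw Hb Hz) as [V HV].
  replace W with V; auto.
  apply (proj1 (is_pseries_tm _ _ _)) in HW. apply (proj1 (is_pseries_tm _ _ _)) in HV.
  assert (Hz2 : 0 <= Cmod z ^ 2 < 1).
  { split. apply pow2_ge_0. pose proof (Cmod_ge_0 z). nra. }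
  pose proof (Series_correct _ (weight_geom beta Hw _ Hz2)) as HZ.
  set (Z := Series (fun n => (Cmod z ^ 2) ^ n / beta n)) in *.
  assert (z0 : forall k, 0 <= (Cmod z ^ 2) ^ k / beta k).
  { intros k. unfold Rdiv. apply Rmult_le_pos. apply pow_le; lra. left; apply Rinv_0_lt_compat; auto. }
  assert (Z0 : 0 <= Z) by (eapply Rle_trans; [apply (z0 0%nat)|apply (term_le_series _ _ z0 HZ)]).
  assert (Bnd : forall L t, 0 < t ->
     Cmod (Cminus V (horv phi a L z)) <= t / 2 * (K0 * (SA - sum_f_R0 (fun k => Cmod (a k) ^ 2 * beta k) L)) + Z / (2 * t)).
  { intros L t Ht.
    set (e := fun k => Cminus (b k) (hor c a L k)).
    assert (He : is_series (tm e z) (Cminus V (horv phi a L z))).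
    { pose proof (is_series_minus _ _ _ _ HV (PS_hor c phi HPS L a z Hz)) as HM.
      eapply is_series_ext; [|exact HM]. intros n. unfold e, tm. simpl. change plus with Cplus. change opp with Copp. ring. }
    replace (Cminus V (horv phi a L z)) with (Cminus (Cminus V (horv phi a L z)) (RtoC 0)) by ring.
    apply (lim_bound_C _ _ _ _ 0 He). intros n _.
    replace (Cminus (csum (tm e z) n) (RtoC 0)) with (csum (tm e z) n) by ring.
    eapply Rle_trans. apply Cmod_csum_le.
    eapply Rle_trans.
    { apply (sum_Rle _ (fun k => (t * (Cmod (e k) ^ 2 * beta k) + (Cmod z ^ 2) ^ k / (t * beta k)) / 2)).
      intros k _. rewrite Cmod_tm. replace ((Cmod z ^ 2) ^ k) with ((Cmod z ^ k) ^ 2) by (rewrite <- !pow_mult; f_equal; lia).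
      apply amgm; auto. }
    assert (E1 : sum_f_R0 (fun k => (t * (Cmod (e k) ^ 2 * beta k) + (Cmod z ^ 2) ^ k / (t * beta k)) / 2) n =
      t / 2 * sum_f_R0 (fun k => Cmod (e k) ^ 2 * beta k) n + / (2 * t) * sum_f_R0 (fun k => (Cmod z ^ 2) ^ k / beta k) n).
    { rewrite !scal_sum, <- plus_sum. apply sum_eq. intros k _. field. split; [lra|apply Rgt_not_eq, Hpos]. }
    rewrite E1.
    assert (E2 : sum_f_R0 (fun k => (Cmod z ^ 2) ^ k / beta k) n <= Z) by (apply series_partial_le; auto).
    assert (E3 : sum_f_R0 (fun k => Cmod (e k) ^ 2 * beta k) n <= K0 * (SA - sum_f_R0 (fun k => Cmod (a k) ^ 2 * beta k) L)).
    { rewrite (sum_eq _ (fun k => Cmod (comp c (fun m => Cminus (a m) (PL L a m)) k) ^ 2 * beta k)).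
      2:{ intros k _. unfold e, b. rewrite comp_diff by auto. reflexivity. }
      eapply Rle_trans. apply Key. apply Rmult_le_compat_l. lra.
      set (g := fun k => Cmod (a k) ^ 2 * beta k).
      rewrite (sum_eq _ (fun k => if Nat.leb k L then 0 else g k)).
      2:{ intros k _. unfold PL, g. destruct (Nat.leb k L).
          replace (Cminus (a k) (a k)) with (RtoC 0) by ring. rewrite Cmod_0. ring.
          replace (Cminus (a k) (RtoC 0)) with (a k) by ring. reflexivity. }
      eapply Rle_trans. apply (sum_mono_nonneg _ n (max n L)).
      intros k. destruct (Nat.leb k L). lra. apply g0. lia.
      rewrite <- sum_split_R by lia.
      pose proof (series_partial_le _ _ g0 HSA (max n L)). unfold g. lra. }
    assert (0 < / (2 * t)) by (apply Rinv_0_lt_compat; lra).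
    replace (Z / (2 * t)) with (/ (2 * t) * Z) by (field; lra).
    apply Rplus_le_compat. apply Rmult_le_compat_l; lra. apply Rmult_le_compat_l; lra. }
  apply Ceq_minus. apply Cmod_0_eq.
  apply Rle_plus_epsilon. intros eps Heps. rewrite Rplus_0_l.
  set (t := (Z + 1) * 3 / eps).
  assert (Ht : 0 < t) by (unfold t; apply Rdiv_lt_0_compat; lra).
  assert (HZt : Z / (2 * t) <= eps / 3).
  { apply (Rmult_le_reg_r (2 * t)). lra. unfold t.
    replace (Z / (2 * ((Z + 1) * 3 / eps)) * (2 * ((Z + 1) * 3 / eps))) with Z by (field; lra).
    replace (eps / 3 * (2 * ((Z + 1) * 3 / eps))) with (2 * (Z + 1)) by (field; lra). lra. }
  assert (Hd : 0 < eps / 3 / (t / 2 * K0 + 1)).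
  { apply Rdiv_lt_0_compat. lra. nra. }
  destruct (series_partial_conv _ _ HSA _ Hd) as [L1 HL1].
  destruct (csum_conv_C _ _ HW (eps / 3) ltac:(lra)) as [L2 HL2].
  set (L := max L1 L2).
  specialize (HL1 L ltac:(lia)). specialize (HL2 L ltac:(lia)).
  specialize (Bnd L t Ht).
  rewrite horv_csum in Bnd.
  pose proof (series_partial_le _ _ g0 HSA L).
  set (tau := SA - sum_f_R0 (fun k => Cmod (a k) ^ 2 * beta k) L) in *.
  assert (Htau : tau < eps / 3 / (t / 2 * K0 + 1)) by (unfold tau; rewrite Rabs_left1 in HL1; lra).
  assert (Htau0 : 0 <= tau) by (unfold tau; lra).
  assert (t / 2 * (K0 * tau) <= eps / 3).
  { assert (tau * (t / 2 * K0 + 1) <= eps / 3).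
    { apply (Rmult_le_reg_r (/ (t / 2 * K0 + 1))). apply Rinv_0_lt_compat; nra.
      rewrite Rmult_assoc, Rinv_r by nra. rewrite Rmult_1_r. left; exact Htau. }
    nra. }
  replace (Cminus V W) with (Cplus (Cminus V (csum (tm a (phi z)) L)) (Cminus (csum (tm a (phi z)) L) W)) by ring.
  eapply Rle_trans. apply Cmod_triangle. lra.
- unfold H2norm.
  assert (HSb : Series (fun n => Cmod (b n) ^ 2 * beta n) <= K0 * SA).
  { apply (series_le_bound (fun n => Cmod (b n) ^ 2 * beta n)); auto. apply Series_correct. exact Hb. }
  rewrite (is_series_unique _ _ HSA).
  rewrite <- sqrt_mult by lra. apply sqrt_le_1_alt. exact HSb.
Qed.

Definition dm (m : nat) (x : C) (j : nat) : C := if Nat.eqb j m then x else RtoC 0.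

Lemma PS_mono m : PS (dm m (RtoC 1)) (fun z => Cpow z m).
Proof.
intros z Hz. replace (Cpow z m) with (csum (tm (dm m (RtoC 1)) z) m).
apply is_series_fin. intros k Hk. unfold tm, dm. destruct (Nat.eqb_spec k m). lia. ring.
rewrite csum_last. unfold tm, dm. rewrite Nat.eqb_refl. ring.
intros k Hk. unfold tm, dm. destruct (Nat.eqb_spec k m). lia. ring.
Qed.

Lemma conv_dm_l m x d i : conv (dm m x) d i = if Nat.leb m i then Cmult x (d (i - m)%nat) else RtoC 0.
Proof.
unfold conv. destruct (Nat.leb_spec m i).
- rewrite <- (csum_pick m i (Cmult x (d (i - m)%nat))) by auto. apply csum_ext_loc. intros l Hl.
  unfold dm. destruct (Nat.eqb_spec l m); destruct (Nat.eqb_spec m l); try lia. subst. reflexivity. ring.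
- apply csum_zero. intros l Hl. unfold dm. destruct (Nat.eqb_spec l m). lia. ring.
Qed.

Lemma conv_plus_l c1 c2 d n : conv (fun k => Cplus (c1 k) (c2 k)) d n = Cplus (conv c1 d n) (conv c2 d n).
Proof. unfold conv. rewrite <- csum_plus. apply csum_ext_loc. intros. ring. Qed.

Lemma conv_scal_l s c d n : conv (fun k => Cmult s (c k)) d n = Cmult s (conv c d n).
Proof. unfold conv. rewrite <- csum_mult_l. apply csum_ext_loc. intros. ring. Qed.

Lemma conv_ext_l c1 c2 d n : (forall k, c1 k = c2 k) -> conv c1 d n = conv c2 d n.
Proof. intros H. unfold conv. apply csum_ext_loc. intros. rewrite H. reflexivity. Qed.


Definition cs (al bt : R) (k : nat) : nat -> C := fun j => Cplus (Cmult (RtoC al) (dm 1 (RtoC 1) j)) (Cmult (RtoC bt) (dm (S k) (RtoC 1) j)).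
Definition phs (al bt : R) (k : nat) (z : C) : C := Cplus (Cmult (RtoC al) z) (Cmult (RtoC bt) (Cpow z (S k))).

Lemma PS_phs al bt k : PS (cs al bt k) (phs al bt k).
Proof.
apply (PS_ext (fun j => Cplus (Cmult (RtoC al) (dm 1 (RtoC 1) j)) (Cmult (RtoC bt) (dm (S k) (RtoC 1) j))) _ (fun z => Cplus (Cmult (RtoC al) (Cpow z 1)) (Cmult (RtoC bt) (Cpow z (S k))))).
intros; reflexivity. intros z _. unfold phs. f_equal. f_equal. simpl. ring.
apply PS_plus'; apply PS_scal; apply PS_mono.
Qed.

Lemma cs0 al bt k : cs al bt k 0%nat = RtoC 0.
Proof. unfold cs, dm. simpl. ring. Qed.

Lemma conv_cs al bt k d i : conv (cs al bt k) d i =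
  Cplus (if Nat.leb 1 i then Cmult (RtoC al) (d (i - 1)%nat) else RtoC 0)
        (if Nat.leb (S k) i then Cmult (RtoC bt) (d (i - S k)%nat) else RtoC 0).
Proof.
unfold cs. rewrite conv_plus_l, !conv_scal_l, !conv_dm_l.
destruct (Nat.leb 1 i); destruct (Nat.leb (S k) i); ring.
Qed.

Lemma powc_diag al bt k (Hk : (1 <= k)%nat) j : powc (cs al bt k) j j = Cpow (RtoC al) j.
Proof.
induction j. reflexivity.
simpl powc. rewrite conv_cs. replace (S j - 1)%nat with j by lia. rewrite IHj.
destruct (Nat.leb_spec 1 (S j)); [|lia].
destruct (Nat.leb_spec (S k) (S j)).
- rewrite powc_low. simpl. ring. apply cs0. lia.
- simpl. ring.
Qed.

Lemma powc_off al bt k (Hk : (1 <= k)%nat) j : powc (cs al bt k) j (j + k)%nat = Cmult (RtoC (INR j)) (Cmult (Cpow (RtoC al) (j - 1)) (RtoC bt)).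
Proof.
induction j.
- simpl. unfold delta0. destruct (Nat.eqb_spec k 0). lia. simpl. ring.
- simpl powc. rewrite conv_cs. replace (S (j + k) - 1)%nat with (j + k)%nat by lia.
  replace (S (j + k) - S k)%nat with j by lia. rewrite IHj, (powc_diag al bt k Hk).
  destruct (Nat.leb_spec 1 (S (j + k))); [|lia]. destruct (Nat.leb_spec (S k) (S (j + k))); [|lia].
  rewrite S_INR. destruct j.
  + simpl. rewrite RtoC_plus. ring.
  + replace (S (S j) - 1)%nat with (S j) by lia. replace (S j - 1)%nat with j by lia.
    simpl. rewrite RtoC_plus. ring.
Qed.



Lemma PS_powc c phi : PS c phi -> forall n, PS (powc c n) (fun z => Cpow (phi z) n).
Proof.
intros H n. induction n; simpl.
- eapply PS_ext; [| |apply (PS_delta0 (RtoC 1))]. intros; reflexivity. intros; reflexivity.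
- eapply PS_ext; [| |apply (PS_mult _ _ _ _ H IHn)]. intros; reflexivity. intros; reflexivity.
Qed.

Lemma exp_pow_nat x m : exp x ^ m = exp (INR m * x).
Proof.
induction m. simpl. rewrite Rmult_0_l, exp_0. reflexivity.
rewrite S_INR. simpl pow. rewrite IHm, <- exp_plus. f_equal. ring.
Qed.

Lemma lower_third n : (1 <= n)%nat -> 1 / 3 <= (1 - 1 / INR n) ^ (n - 1).
Proof.
intros Hn. destruct n. lia. destruct n.
- simpl. lra.
- set (m := S n). replace (S m - 1)%nat with m by lia.
  assert (Hm : 1 <= INR m) by (apply (le_INR 1); unfold m; lia).
  replace (INR (S m)) with (INR m + 1) by (rewrite S_INR; ring).
  replace (1 - 1 / (INR m + 1)) with (/ (1 + 1 / INR m)) by (field; lra).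
  rewrite pow_inv.
  assert (H1 : (1 + 1 / INR m) ^ m <= 3).
  { eapply Rle_trans. apply pow_incr. split. assert (0 < 1 / INR m) by (apply Rdiv_lt_0_compat; lra). lra.
    left. apply exp_ineq1. assert (0 < 1 / INR m) by (apply Rdiv_lt_0_compat; lra). lra.
    rewrite exp_pow_nat. replace (INR m * (1 / INR m)) with 1 by (field; lra). apply exp_le_3. }
  assert (H2 : 0 < (1 + 1 / INR m) ^ m).
  { apply pow_lt. assert (0 < 1 / INR m) by (apply Rdiv_lt_0_compat; lra). lra. }
  apply (Rmult_le_reg_r ((1 + 1 / INR m) ^ m)); auto.
  rewrite Rinv_l by lra. lra.
Qed.

Lemma key_bound beta M : weight_ok beta ->
  (forall phi, symbol phi -> phi (RtoC 0) = RtoC 0 -> Cphi_bounded_by beta phi M) ->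
  forall n m, (1 <= n)%nat -> (n < m)%nat -> beta m <= 9 * M ^ 2 * beta n.
Proof.
intros Hw HM n m Hn Hnm.
pose proof Hw as [Hpos _].
set (k := (m - n)%nat).
assert (Hk : (1 <= k)%nat) by (unfold k; lia).
assert (HnR : 1 <= INR n) by (apply (le_INR 1); lia).
set (al := 1 - 1 / INR n). set (bt := 1 / INR n).
assert (Hal : 0 <= al).
{ unfold al. assert (1 / INR n <= 1). { unfold Rdiv. rewrite Rmult_1_l. rewrite <- Rinv_1. apply Rinv_le_contravar; lra. } lra. }
assert (Hbt : 0 < bt) by (unfold bt; apply Rdiv_lt_0_compat; lra).
assert (Hab : al + bt = 1) by (unfold al, bt; ring).
set (phi := phs al bt k).
assert (Hphi_disk : forall z, Cmod z < 1 -> Cmod (phi z) <= Cmod z).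
{ intros z Hz. unfold phi, phs. eapply Rle_trans. apply Cmod_triangle.
  rewrite !Cmod_mult, !Cmod_R, Cmod_pow, !Rabs_right by lra.
  assert (Cmod z ^ S k <= Cmod z ^ 1).
  { apply pow_decr_exp. pose proof (Cmod_ge_0 z). lra. lia. }
  simpl in H |- *. nra. }
assert (Hsym : symbol phi).
{ split; [|split].
  - exists (cs al bt k). intros z Hz. apply is_pseries_tm. apply PS_phs; auto.
  - intros z Hz. unfold in_disk in *. specialize (Hphi_disk z Hz). lra.
  - exists (RtoC 0), (RtoC (1/2)). split; [unfold in_disk; rewrite Cmod_0; lra|].
    split; [unfold in_disk; rewrite Cmod_R, Rabs_right; lra|].
    assert (Hre : forall x, phi (RtoC x) = RtoC (al * x + bt * x ^ S k)).
    { intros x. unfold phi, phs. rewrite RtoC_plus, !RtoC_mult, RtoC_pow. reflexivity. }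
    rewrite !Hre. intros E. apply RtoC_inj in E.
    rewrite pow_i in E by lia. assert (0 < (1/2) ^ S k) by (apply pow_lt; lra). nra. }
assert (Hphi0 : phi (RtoC 0) = RtoC 0).
{ unfold phi, phs. rewrite <- (RtoC_pow 0), pow_i by lia. ring. }
set (e := dm n (RtoC 1)).
assert (He : is_series (fun j => Cmod (e j) ^ 2 * beta j) (beta n)).
{ replace (beta n) with (sum_f_R0 (fun j => Cmod (e j) ^ 2 * beta j) n).
  apply is_series_fin_R. intros j Hj. unfold e, dm. destruct (Nat.eqb_spec j n). lia. rewrite Cmod_0. ring.
  destruct n. lia. simpl. rewrite (sum_eq _ (fun _ => 0)). rewrite sum_cte. unfold e, dm. rewrite Nat.eqb_refl.
  rewrite Cmod_1. ring. intros i Hi. unfold e, dm. destruct (Nat.eqb_spec i (S n)). lia. rewrite Cmod_0. ring. }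
assert (HeH : inH2 beta e) by (exists (beta n); exact He).
destruct (HM phi Hsym Hphi0 e HeH) as [b [Hcc [Hb Hnorm]]].
assert (HPb : PS b (fun z => Cpow (phi z) n)).
{ intros z Hz. destruct (Hcc z Hz) as [w [H1 H2]].
  assert (Hpz : Cmod (phi z) < 1) by (specialize (Hphi_disk z Hz); lra).
  pose proof (PS_mono n (phi z) Hpz) as H3. apply (proj1 (is_pseries_tm _ _ _)) in H1.
  replace (Cpow (phi z) n) with w. apply (proj1 (is_pseries_tm _ _ _)) in H2. exact H2.
  apply (is_series_C_unique _ _ _ H1 H3). }
assert (Hbm : b m = Cpow (RtoC al) (n - 1)).
{ rewrite (PS_unique _ _ _ HPb (PS_powc _ _ (PS_phs al bt k) n) m).
  replace m with (n + k)%nat by (unfold k; lia). rewrite powc_off by auto.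
  replace (Cmult (RtoC (INR n)) (Cmult (Cpow (RtoC al) (n - 1)) (RtoC bt))) with
    (Cmult (Cpow (RtoC al) (n - 1)) (RtoC (INR n * bt))) by (rewrite RtoC_mult; ring).
  replace (INR n * bt) with 1 by (unfold bt; field; lra). ring. }
unfold H2norm in Hnorm. rewrite (is_series_unique _ _ He) in Hnorm.
pose proof (Series_correct _ Hb) as HSb.
set (Sb := Series (fun n0 => Cmod (b n0) ^ 2 * beta n0)) in *.
assert (g0 : forall j, 0 <= Cmod (b j) ^ 2 * beta j).
{ intros j. apply Rmult_le_pos. apply pow2_ge_0. left; auto. }
pose proof (term_le_series _ _ g0 HSb m) as Tm.
simpl in Tm. assert (Sb0 : 0 <= Sb) by (pose proof (g0 m); lra).
assert (HS : Sb <= M ^ 2 * beta n).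
{ rewrite <- (sqrt_sqrt Sb) by auto. pose proof (sqrt_pos Sb).
  replace (M ^ 2 * beta n) with ((M * sqrt (beta n)) ^ 2).
  2:{ rewrite Rpow_mult_distr. rewrite pow2_sqrt. reflexivity. left; auto. }
  rewrite <- Rsqr_pow2. unfold Rsqr. apply Rmult_le_compat; auto. }
rewrite Hbm, Cmod_pow, Cmod_R, Rabs_right in Tm by lra.
pose proof (lower_third n Hn) as L3. fold al in L3. fold bt in L3.
assert (1 / 9 <= (al ^ (n - 1)) ^ 2).
{ replace (1/9) with ((1/3)^2) by field. apply pow_incr. lra. }
assert (0 < beta m) by auto.
nra.
Qed.

Lemma backward beta : weight_ok beta ->
  (exists M : R, forall phi : C -> C, symbol phi -> phi (RtoC 0) = RtoC 0 -> Cphi_bounded_by beta phi M) ->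
  ess_decreasing beta.
Proof.
intros Hw [M HM]. pose proof Hw as [Hpos _].
pose proof (key_bound beta M Hw HM) as KB.
assert (HM2 : 0 <= 9 * M ^ 2) by (pose proof (pow2_ge_0 M); lra).
assert (Hr : 0 < beta 1%nat / beta 0%nat) by (apply Rdiv_lt_0_compat; auto).
set (r := beta 1%nat / beta 0%nat) in *.
assert (Hr9 : 0 <= 9 * M ^ 2 * r) by (apply Rmult_le_pos; lra).
exists (1 + 9 * M ^ 2 + r + 9 * M ^ 2 * r).
split. lra.
set (K := 1 + 9 * M ^ 2 + r + 9 * M ^ 2 * r).
assert (K1 : 1 <= K) by (unfold K; lra).
assert (K2 : r <= K) by (unfold K; lra).
assert (K3 : 9 * M ^ 2 <= K) by (unfold K; lra).
assert (K4 : 9 * M ^ 2 * r <= K) by (unfold K; lra).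
intros m n Hnm. pose proof (Hpos n). pose proof (Hpos m).
assert (E : r * beta 0%nat = beta 1%nat) by (unfold r; field; apply Rgt_not_eq, Hpos).
destruct (Nat.eq_dec m n) as [->|Hne].
- nra.
- destruct n.
  + destruct (Nat.eq_dec m 1) as [->|Hm1].
    * pose proof (Hpos 0%nat). nra.
    * specialize (KB 1%nat m ltac:(lia) ltac:(lia)). pose proof (Hpos 0%nat). nra.
  + specialize (KB (S n) m ltac:(lia) ltac:(lia)). nra.
Qed.


Theorem mainTheorem5 (beta : nat -> R) :
  weight_ok beta ->
  ((exists M : R, forall phi : C -> C,
       symbol phi -> phi (RtoC 0) = RtoC 0 -> Cphi_bounded_by beta phi M)
   <-> ess_decreasing beta).
Proof.
intros Hw. split.
- apply backward; auto.
- intros [K0 [HK Hdec]]. exists (sqrt K0). intros phi Hs H0. apply forward; auto.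
Qed.
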